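(* For every integer $n\ge 1$, $5^n$ is selfcondensable; i.e., $5^n$ can be obtained from the digits of its own decimal representation (each used exactly once) using addition, subtraction, multiplication, division, powers and factorials.
   Context: For a finite nonempty multiset $S$ of real numbers, $V(S)$ is the smallest set of real numbers such that: (1) if $|S|=1$ then $S\subseteq V(S)$; (2) if $|S|\ge 2$, then for all nonempty multisets $A,B$ with $A+B=S$ (multiplicities add) and all $a\in V(A)$, $b\in V(B)$, each of $a+b,\ a-b,\ b-a,\ ab,\ a/b,\ b/a,\ a^b,\ b^a$ lies in $V(S)$ whenever it is a well-defined real number; (3) if $a\in V(S)$ is a nonnegative integer then $a!\in V(S)$ (with $0!=1$). A positive integer $N$ is selfcondensable if $N\in V(S_N)$, where $S_N$ is the multiset of the digits of the decimal representation of $N$ (each digit counted with its multiplicity). *)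

(* Defs.v *)
From Stdlib Require Import Reals List Permutation ZArith Arith.
Import ListNotations.
Open Scope R_scope.

(* a^b "whenever it is a well-defined real number":
   a > 0 (any real b), a = 0 with b > 0 (value 0),
   a <> 0 with b an integer (value powerRZ a b). *)
Definition pow_rel (a b r : R) : Prop :=
  (0 < a /\ r = Rpower a b)
  \/ (a = 0 /\ 0 < b /\ r = 0)
  \/ (a <> 0 /\ exists z : Z, b = IZR z /\ r = powerRZ a z).

Definition combine (a b r : R) : Prop :=
  r = a + b \/ r = a - b \/ r = b - a \/ r = a * b
  \/ (b <> 0 /\ r = a / b) \/ (a <> 0 /\ r = b / a)
  \/ pow_rel a b r \/ pow_rel b a r.

(* Multisets of reals are lists up to permutation.
   V S x  <->  x \in V(S)  (least set closed under the rules). *)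
Inductive V : list R -> R -> Prop :=
  | V_single : forall x, V [x] x
  | V_comb : forall (S A B : list R) (a b r : R),
      A <> [] -> B <> [] -> Permutation (A ++ B) S ->
      V A a -> V B b -> combine a b r -> V S r
  | V_fact : forall (S : list R) (k : nat),
      V S (INR k) -> V S (INR (fact k)).

(* decimal digits of n (least significant first), with fuel *)
Fixpoint digits_aux (fuel n : nat) : list nat :=
  match fuel with
  | O => []
  | S f => if (n <? 10)%nat then [n] else (n mod 10)%nat :: digits_aux f (n / 10)%nat
  end.

Definition digits (n : nat) : list nat := digits_aux n n.

Definition selfcondensable (N : nat) : Prop :=
  (1 <= N)%nat /\ V (map INR (digits N)) (INR N).

(* Main.v *)
Require Import Defs.
From Stdlib Require Import Reals List Permutation ZArith Arith.
From Stdlib Require Import Reals List Permutation ZArith NArith Arith Lia Lra ZifyNat.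
Import ListNotations.
Open Scope R_scope.

Lemma V_nonempty : forall S x, V S x -> S <> [].
Proof.
  intros S x H; induction H; try discriminate; auto.
  intro E; subst. apply Permutation_sym, Permutation_nil in H1.
  destruct A; [congruence|discriminate].
Qed.

Lemma V_perm : forall S x, V S x -> forall S', Permutation S S' -> V S' x.
Proof.
  intros S x H; induction H; intros S' HP.
  - apply Permutation_length_1_inv in HP; subst; apply V_single.
  - apply (V_comb S' A B a b r H H0 (perm_trans H1 HP) H2 H3 H4).
  - apply V_fact; auto.
Qed.

Definition W (l : list nat) (z : Z) : Prop := V (map INR l) (IZR z).

Lemma W_ne : forall l z, W l z -> l <> []%list.
Proof. intros l z H E; subst; apply V_nonempty in H; auto. Qed.

Lemma W_comb : forall A B a b r, W A a -> W B b -> Defs.combine (IZR a) (IZR b) r ->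
  V (map INR (A ++ B)) r.
Proof.
  intros A B a b r HA HB Hc. eapply V_comb; [ | | | exact HA | exact HB | exact Hc].
  - intro E. apply (W_ne _ _ HA). destruct A; [reflexivity|discriminate].
  - intro E. apply (W_ne _ _ HB). destruct B; [reflexivity|discriminate].
  - rewrite map_app; apply Permutation_refl.
Qed.

Lemma W_leaf : forall d, W [d] (Z.of_nat d).
Proof. intro d; unfold W; simpl; rewrite <- INR_IZR_INZ; constructor. Qed.

Lemma W_add : forall A B a b c, W A a -> W B b -> c = (a + b)%Z -> W (A ++ B) c.
Proof. intros; subst; unfold W; eapply W_comb; eauto; left; now rewrite plus_IZR. Qed.
Lemma W_sub : forall A B a b c, W A a -> W B b -> c = (a - b)%Z -> W (A ++ B) c.
Proof. intros; subst; unfold W; eapply W_comb; eauto; right; left; now rewrite minus_IZR. Qed.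
Lemma W_mul : forall A B a b c, W A a -> W B b -> c = (a * b)%Z -> W (A ++ B) c.
Proof. intros; subst; unfold W; eapply W_comb; eauto; do 3 right; left; now rewrite mult_IZR. Qed.
Lemma W_div : forall A B a b c, W A a -> W B b -> b <> 0%Z -> a = (b * c)%Z -> W (A ++ B) c.
Proof.
  intros; subst; unfold W; eapply W_comb; eauto; do 4 right; left; split.
  - now apply not_0_IZR.
  - rewrite mult_IZR; field; now apply not_0_IZR.
Qed.
Lemma W_pow : forall A B a k c, a <> 0%Z -> W A a -> W B (Z.of_nat k) ->
  c = (a ^ Z.of_nat k)%Z -> W (A ++ B) c.
Proof.
  intros; subst; unfold W; eapply W_comb; eauto; do 6 right; left.
  right; right; split; [now apply not_0_IZR|].
  exists (Z.of_nat k); split; [reflexivity|].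
  now rewrite <- pow_powerRZ, pow_IZR.
Qed.
Lemma W_zpow : forall A B b, W A 0 -> W B b -> (0 < b)%Z -> W (A ++ B) 0.
Proof.
  intros; unfold W; eapply W_comb; eauto; do 6 right; left.
  right; left; repeat split; auto. now apply IZR_lt.
Qed.
Lemma W_fact : forall A k, W A (Z.of_nat k) -> W A (Z.of_nat (fact k)).
Proof.
  intros A k H; unfold W in *; rewrite <- INR_IZR_INZ in *; now apply V_fact.
Qed.

Fixpoint ins (x : nat) (l : list nat) := match l with
  | [] => [x] | y :: l' => if x <=? y then x :: l else y :: ins x l' end.
Fixpoint isort (l : list nat) := match l with [] => [] | x :: l' => ins x (isort l') end.
Lemma ins_perm : forall x l, Permutation (ins x l) (x :: l).
Proof.
  intros x l; induction l; simpl; auto.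
  destruct (x <=? a); auto.
  eapply perm_trans; [apply perm_skip, IHl|apply perm_swap].
Qed.
Lemma isort_perm : forall l, Permutation (isort l) l.
Proof. induction l; simpl; auto. eapply perm_trans; [apply ins_perm|auto]. Qed.

Lemma W_perm : forall l l' z, isort l = isort l' -> W l z -> W l' z.
Proof.
  intros l l' z E H. unfold W in *. eapply V_perm; [exact H|].
  apply Permutation_map. eapply perm_trans; [apply Permutation_sym, isort_perm|].
  rewrite E; apply isort_perm.
Qed.

Lemma W_permP : forall l l' z, Permutation l l' -> W l z -> W l' z.
Proof. intros; unfold W in *; eapply V_perm; eauto; now apply Permutation_map. Qed.
Open Scope nat_scope.
Lemma fuel : forall f g n, 1 <= f -> 1 <= g -> n <= f -> n <= g ->
  digits_aux f n = digits_aux g n.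
Proof.
  induction f as [|f IH]; intros g n Hf Hg Hnf Hng; [lia|].
  destruct g as [|g]; [lia|]. cbn [digits_aux].
  destruct (n <? 10) eqn:E; [reflexivity|].
  apply Nat.ltb_ge in E. f_equal.
  assert (1 <= n / 10) by (apply Nat.div_le_lower_bound; lia).
  assert (n / 10 < n) by (apply Nat.div_lt; lia).
  apply IH; lia.
Qed.

Lemma digits_eq : forall n, 1 <= n ->
  digits n = if n <? 10 then [n] else n mod 10 :: digits (n / 10).
Proof.
  intros n Hn. unfold digits. destruct n as [|m]; [lia|]. simpl digits_aux at 1.
  destruct (S m <? 10) eqn:E; [reflexivity|].
  apply Nat.ltb_ge in E. f_equal.
  assert (1 <= S m / 10) by (apply Nat.div_le_lower_bound; lia).
  assert (S m / 10 < S m) by (apply Nat.div_lt; lia).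
  apply fuel; lia.
Qed.

Lemma digits_lt10 : forall n, 1 <= n -> Forall (fun d => d <= 9) (digits n).
Proof.
  intro n; induction n as [n IH] using lt_wf_ind; intro Hn.
  rewrite digits_eq by lia. destruct (n <? 10) eqn:E.
  - apply Nat.ltb_lt in E. constructor; auto; lia.
  - apply Nat.ltb_ge in E. constructor.
    + pose proof (Nat.mod_upper_bound n 10). lia.
    + apply IH. apply Nat.div_lt; lia. apply Nat.div_le_lower_bound; lia.
Qed.

Lemma digits_len : forall n, 1 <= n -> n < 10 ^ length (digits n).
Proof.
  intro n; induction n as [n IH] using lt_wf_ind; intro Hn.
  rewrite digits_eq by lia. destruct (n <? 10) eqn:E.
  - apply Nat.ltb_lt in E. simpl. lia.
  - apply Nat.ltb_ge in E. cbn [length]. rewrite Nat.pow_succ_r'.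
    assert (H := IH (n/10) ltac:(apply Nat.div_lt; lia) ltac:(apply Nat.div_le_lower_bound; lia)).
    pose proof (Nat.div_mod_eq n 10). pose proof (Nat.mod_upper_bound n 10 ltac:(lia)). nia.
Qed.

Fixpoint dN (f : nat) (x : N) : list N :=
  match f with
  | O => []
  | S f => if (x <? 10)%N then [x] else (x mod 10)%N :: dN f (x / 10)%N
  end.

Lemma dN_ok : forall f x, (0 < x)%N -> (x < 10 ^ N.of_nat f)%N ->
  digits (N.to_nat x) = map N.to_nat (dN f x).
Proof.
  induction f as [|f IH]; intros x H0 H1; [simpl in H1; lia|].
  rewrite digits_eq by lia. simpl dN.
  destruct (x <? 10)%N eqn:E.
  - apply N.ltb_lt in E. replace (N.to_nat x <? 10) with true; [reflexivity|].
    symmetry; apply Nat.ltb_lt; lia.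
  - apply N.ltb_ge in E. replace (N.to_nat x <? 10) with false
      by (symmetry; apply Nat.ltb_ge; lia).
    simpl. rewrite N2Nat.inj_mod, <- IH. rewrite N2Nat.inj_div. reflexivity.
    + apply N.div_str_pos; lia.
    + rewrite Nat2N.inj_succ, N.pow_succ_r' in H1.
      apply N.div_lt_upper_bound; lia.
Qed.
Open Scope Z_scope.
Definition valid (it : list nat * Z) := W (fst it) (snd it) /\ 1 <= snd it <= 9.
Definition sumc (its : list (list nat * Z)) := fold_right (fun it s => snd it + s) 0 its.

Lemma greedy : forall its t A v, Forall valid its -> W A v ->
  (t - 8 <= v <= t + 9 \/ (v < t - 8 /\ v + sumc its >= t)) ->
  exists v', W (A ++ concat (map fst its)) v' /\ t - 8 <= v' <= t + 9.
Proof.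
  induction its as [|[l c] its IH]; intros t A v HF HA Hv.
  - simpl in *. exists v. rewrite app_nil_r. split; auto. lia.
  - inversion HF as [|? ? [Hl Hc] HF']; subst. simpl in *.
    rewrite app_assoc.
    destruct (Z_le_gt_dec v t).
    + apply (IH t (A ++ l) (v + c)); auto.
      * eapply W_add; eauto.
      * lia.
    + apply (IH t (A ++ l) (v - c)); auto.
      * eapply W_sub; eauto.
      * lia.
Qed.

Lemma greedy0 : forall its t, Forall valid its -> 0 <= t -> 1 <= sumc its -> t <= sumc its ->
  exists v, W (concat (map fst its)) v /\ t - 8 <= v <= t + 9.
Proof.
  intros [|[l c] its] t HF H0 H1 H2; [simpl in H1; lia|].
  inversion HF as [|? ? [Hl Hc] HF']; subst. simpl in *.
  apply (greedy its t l c); auto. lia.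
Qed.

Fixpoint mk (pend : list nat) (U : list nat) : list (list nat * Z) :=
  match U with
  | [] => map (fun d => ([d], 1)) pend
  | d :: U' => if (2 <=? d)%nat then ([d], Z.of_nat d) :: mk pend U'
      else match pend with
           | [a; b] => ([a; b; d], 6) :: mk [] U'
           | _ => mk (d :: pend) U'
           end
  end.

Lemma W_one : forall d, (d <= 1)%nat -> W [d] 1.
Proof.
  intros d Hd. destruct d as [|[|]]; [| |lia].
  - apply (W_fact [0%nat] 0 (W_leaf 0)).
  - apply (W_leaf 1).
Qed.

Lemma mk_cons : forall pend d U, mk pend (d :: U) =
  if (2 <=? d)%nat then ([d], Z.of_nat d) :: mk pend U
      else match pend with
           | [a; b] => ([a; b; d], 6) :: mk [] U
           | _ => mk (d :: pend) U
           end.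
Proof. reflexivity. Qed.

Lemma mk_perm : forall U pend, Permutation (concat (map fst (mk pend U))) (pend ++ U).
Proof.
  induction U as [|d U IH]; intro pend.
  - simpl. rewrite app_nil_r. induction pend; simpl; auto.
  - rewrite mk_cons. destruct (2 <=? d)%nat.
    + simpl. eapply perm_trans; [apply perm_skip, IH|]. apply Permutation_middle.
    + destruct pend as [|a [|b [|x pend]]].
      * apply IH.
      * eapply perm_trans; [apply IH|]. apply (Permutation_middle [a] U d).
      * simpl. do 3 apply perm_skip. apply IH.
      * eapply perm_trans; [apply IH|]. apply (Permutation_middle (a::b::x::pend) U d).
Qed.

Lemma mk_valid : forall U pend, Forall (fun d => (d <= 9)%nat) U ->
  Forall (fun d => (d <= 1)%nat) pend -> Forall valid (mk pend U).
Proof.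
  induction U as [|d U IH]; intros pend HU Hp.
  - simpl. induction Hp; simpl; constructor; auto.
    split; [apply W_one; auto| simpl; lia].
  - inversion HU; subst. rewrite mk_cons. destruct (2 <=? d)%nat eqn:E.
    + apply Nat.leb_le in E. constructor; auto.
      split; [apply W_leaf| simpl; lia].
    + apply Nat.leb_gt in E.
      destruct pend as [|a [|b [|x pend]]]; try (apply IH; [assumption| constructor; [lia|assumption]]).
      pose proof (Forall_inv Hp) as Ha. pose proof (Forall_inv (Forall_inv_tail Hp)) as Hb.
      constructor; [|apply IH; auto].
      split; [|simpl; lia]. simpl.
      apply (W_fact [a;b;d] 3 (W_add [a;b] [d] 2 1 3 (W_add [a] [b] 1 1 2 (W_one a Ha) (W_one b Hb) eq_refl) (W_one d ltac:(lia)) eq_refl)).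
Qed.

Lemma sumc_cons : forall it l, sumc (it :: l) = snd it + sumc l.
Proof. reflexivity. Qed.

Lemma mk_sum : forall U pend, (length pend <= 2)%nat ->
  sumc (mk pend U) >= 2 * (Z.of_nat (length U) + Z.of_nat (length pend)) - 2.
Proof.
  induction U as [|d U IH]; intros pend Hp.
  - destruct pend as [|a [|b [|x pend]]]; cbn in *; lia.
  - rewrite mk_cons. change (length (d :: U)) with (S (length U)).
    rewrite Nat2Z.inj_succ. destruct (2 <=? d)%nat eqn:E.
    + apply Nat.leb_le in E. rewrite sumc_cons. cbn [snd]. specialize (IH pend Hp). lia.
    + destruct pend as [|a [|b [|x pend]]].
      * specialize (IH [d] ltac:(simpl; lia)). cbn [length] in *. lia.
      * specialize (IH [d;a] ltac:(simpl; lia)). cbn [length] in *. lia.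
      * rewrite sumc_cons. cbn [snd]. specialize (IH [] ltac:(simpl; lia)). cbn [length] in *. lia.
      * cbn [length] in Hp. lia.
Qed.
Open Scope nat_scope.
Lemma final : forall n R, Permutation (5%nat :: R) (digits (5 ^ n)) ->
  W R (Z.of_nat n) -> selfcondensable (5 ^ n).
Proof.
  intros n R HP HW. split.
  - pose proof (Nat.pow_le_mono_r 5 0 n ltac:(lia) ltac:(lia)). simpl in H. lia.
  - assert (H := W_pow [5%nat] R 5 n (5 ^ Z.of_nat n)%Z ltac:(discriminate) (W_leaf 5) HW eq_refl).
    apply (W_permP _ _ _ HP) in H. unfold W in H.
    rewrite INR_IZR_INZ, Nat2Z.inj_pow. exact H.
Qed.

Lemma digits_step : forall n, (10 <= n)%nat -> digits n = n mod 10 :: digits (n / 10).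
Proof.
  intros n H. rewrite digits_eq by lia. replace (n <? 10)%nat with false; auto.
  symmetry; apply Nat.ltb_ge; lia.
Qed.

Lemma low5 : forall m, (1 <= m/10/10/10/10/10)%nat ->
  digits m = [m mod 10; m/10 mod 10; m/10/10 mod 10; m/10/10/10 mod 10; m/10/10/10/10 mod 10]
     ++ digits (m/10/10/10/10/10).
Proof.
  intros m H.
  rewrite (digits_step m) by lia. rewrite (digits_step (m/10)) by lia.
  rewrite (digits_step (m/10/10)) by lia. rewrite (digits_step (m/10/10/10)) by lia.
  rewrite (digits_step (m/10/10/10/10)) by lia. reflexivity.
Qed.

Lemma per8 : forall m, (5 <= m)%nat ->
  (Z.of_nat (5 ^ (m + 8)) mod 100000 = Z.of_nat (5 ^ m) mod 100000)%Z.
Proof.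
  intros m Hm.
  replace m with (5 + (m - 5))%nat by lia.
  rewrite !Nat2Z.inj_pow, !Nat2Z.inj_add.
  rewrite !Z.pow_add_r by lia.
  set (Y := (5 ^ Z.of_nat (m - 5))%Z). change (Z.of_nat 5) with 5%Z. change (Z.of_nat 8) with 8%Z.
  change (5 ^ 5)%Z with 3125%Z. change (5^8)%Z with 390625%Z. lia.
Qed.

Lemma tbl : forall k r, (Z.of_nat (5 ^ (8 + r + 8 * k)) mod 100000 = Z.of_nat (5 ^ (8 + r)) mod 100000)%Z.
Proof.
  induction k; intro r.
  - now rewrite Nat.mul_0_r, Nat.add_0_r.
  - replace (8 + r + 8 * S k)%nat with ((8 + r + 8 * k) + 8)%nat by lia.
    rewrite per8 by lia. apply IHk.
Qed.
Lemma adj0 : forall a, (-9 <= a <= 8)%Z -> W [2;6;0;9] a.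
Proof.
  intros a Ha.
  assert (a = -9 \/ a = -8 \/ a = -7 \/ a = -6 \/ a = -5 \/ a = -4 \/ a = -3 \/ a = -2 \/ a = -1 \/ a = 0 \/ a = 1 \/ a = 2 \/ a = 3 \/ a = 4 \/ a = 5 \/ a = 6 \/ a = 7 \/ a = 8 \/ False)%Z as H by lia.
  repeat (destruct H as [H|H]; [subst a|]).
  - exact (W_perm [0;6;9;2] [2;6;0;9] (-9)%Z eq_refl (W_sub [0] [6;9;2] (0)%Z (9)%Z (-9)%Z (W_leaf 0) (W_pow [6;9] [2] (-3)%Z 2 (9)%Z ltac:(discriminate) (W_sub [6] [9] (6)%Z (9)%Z (-3)%Z (W_leaf 6) (W_leaf 9) eq_refl) (W_leaf 2) eq_refl) eq_refl)).
  - exact (W_perm [0;2;9;6] [2;6;0;9] (-8)%Z eq_refl (W_sub [0] [2;9;6] (0)%Z (8)%Z (-8)%Z (W_leaf 0) (W_pow [2] [9;6] (2)%Z 3 (8)%Z ltac:(discriminate) (W_leaf 2) (W_sub [9] [6] (9)%Z (6)%Z (3)%Z (W_leaf 9) (W_leaf 6) eq_refl) eq_refl) eq_refl)).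
  - exact (W_perm [0;9;2;6] [2;6;0;9] (-7)%Z eq_refl (W_sub [0] [9;2;6] (0)%Z (7)%Z (-7)%Z (W_leaf 0) (W_div [9;2] [6] (5040)%Z (720)%Z (7)%Z (W_fact [9;2] 7 (W_sub [9] [2] (9)%Z (2)%Z (7)%Z (W_leaf 9) (W_leaf 2) eq_refl)) (W_fact [6] 6 (W_leaf 6)) ltac:(discriminate) eq_refl) eq_refl)).
  - exact (W_perm [0;2;6;9] [2;6;0;9] (-6)%Z eq_refl (W_add [0] [2;6;9] (0)%Z (-6)%Z (-6)%Z (W_leaf 0) (W_mul [2] [6;9] (2)%Z (-3)%Z (-6)%Z (W_leaf 2) (W_sub [6] [9] (6)%Z (9)%Z (-3)%Z (W_leaf 6) (W_leaf 9) eq_refl) eq_refl) eq_refl)).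
  - exact (W_perm [0;2;6;9] [2;6;0;9] (-5)%Z eq_refl (W_sub [0] [2;6;9] (0)%Z (5)%Z (-5)%Z (W_leaf 0) (W_sub [2] [6;9] (2)%Z (-3)%Z (5)%Z (W_leaf 2) (W_sub [6] [9] (6)%Z (9)%Z (-3)%Z (W_leaf 6) (W_leaf 9) eq_refl) eq_refl) eq_refl)).
  - exact (W_perm [0;2;9;6] [2;6;0;9] (-4)%Z eq_refl (W_add [0] [2;9;6] (0)%Z (-4)%Z (-4)%Z (W_leaf 0) (W_sub [2] [9;6] (2)%Z (6)%Z (-4)%Z (W_leaf 2) (W_fact [9;6] 3 (W_sub [9] [6] (9)%Z (6)%Z (3)%Z (W_leaf 9) (W_leaf 6) eq_refl)) eq_refl) eq_refl)).
  - exact (W_perm [0;9;2;6] [2;6;0;9] (-3)%Z eq_refl (W_add [0] [9;2;6] (0)%Z (-3)%Z (-3)%Z (W_leaf 0) (W_sub [9] [2;6] (9)%Z (12)%Z (-3)%Z (W_leaf 9) (W_mul [2] [6] (2)%Z (6)%Z (12)%Z (W_leaf 2) (W_leaf 6) eq_refl) eq_refl) eq_refl)).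
  - exact (W_perm [0;9;2;6] [2;6;0;9] (-2)%Z eq_refl (W_add [0] [9;2;6] (1)%Z (-3)%Z (-2)%Z (W_fact [0] 0 (W_leaf 0)) (W_sub [9] [2;6] (9)%Z (12)%Z (-3)%Z (W_leaf 9) (W_mul [2] [6] (2)%Z (6)%Z (12)%Z (W_leaf 2) (W_leaf 6) eq_refl) eq_refl) eq_refl)).
  - exact (W_perm [0;2;6;9] [2;6;0;9] (-1)%Z eq_refl (W_add [0] [2;6;9] (0)%Z (-1)%Z (-1)%Z (W_leaf 0) (W_add [2] [6;9] (2)%Z (-3)%Z (-1)%Z (W_leaf 2) (W_sub [6] [9] (6)%Z (9)%Z (-3)%Z (W_leaf 6) (W_leaf 9) eq_refl) eq_refl) eq_refl)).
  - exact (W_perm [0;2;6;9] [2;6;0;9] (0)%Z eq_refl (W_mul [0] [2;6;9] (0)%Z (17)%Z (0)%Z (W_leaf 0) (W_add [2] [6;9] (2)%Z (15)%Z (17)%Z (W_leaf 2) (W_add [6] [9] (6)%Z (9)%Z (15)%Z (W_leaf 6) (W_leaf 9) eq_refl) eq_refl) eq_refl)).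
  - exact (W_perm [0;2;6;9] [2;6;0;9] (1)%Z eq_refl (W_sub [0] [2;6;9] (0)%Z (-1)%Z (1)%Z (W_leaf 0) (W_add [2] [6;9] (2)%Z (-3)%Z (-1)%Z (W_leaf 2) (W_sub [6] [9] (6)%Z (9)%Z (-3)%Z (W_leaf 6) (W_leaf 9) eq_refl) eq_refl) eq_refl)).
  - exact (W_perm [0;2;6;9] [2;6;0;9] (2)%Z eq_refl (W_sub [0] [2;6;9] (1)%Z (-1)%Z (2)%Z (W_fact [0] 0 (W_leaf 0)) (W_add [2] [6;9] (2)%Z (-3)%Z (-1)%Z (W_leaf 2) (W_sub [6] [9] (6)%Z (9)%Z (-3)%Z (W_leaf 6) (W_leaf 9) eq_refl) eq_refl) eq_refl)).
  - exact (W_perm [0;9;2;6] [2;6;0;9] (3)%Z eq_refl (W_sub [0] [9;2;6] (0)%Z (-3)%Z (3)%Z (W_leaf 0) (W_sub [9] [2;6] (9)%Z (12)%Z (-3)%Z (W_leaf 9) (W_mul [2] [6] (2)%Z (6)%Z (12)%Z (W_leaf 2) (W_leaf 6) eq_refl) eq_refl) eq_refl)).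
  - exact (W_perm [0;2;9;6] [2;6;0;9] (4)%Z eq_refl (W_sub [0] [2;9;6] (0)%Z (-4)%Z (4)%Z (W_leaf 0) (W_sub [2] [9;6] (2)%Z (6)%Z (-4)%Z (W_leaf 2) (W_fact [9;6] 3 (W_sub [9] [6] (9)%Z (6)%Z (3)%Z (W_leaf 9) (W_leaf 6) eq_refl)) eq_refl) eq_refl)).
  - exact (W_perm [0;2;6;9] [2;6;0;9] (5)%Z eq_refl (W_add [0] [2;6;9] (0)%Z (5)%Z (5)%Z (W_leaf 0) (W_sub [2] [6;9] (2)%Z (-3)%Z (5)%Z (W_leaf 2) (W_sub [6] [9] (6)%Z (9)%Z (-3)%Z (W_leaf 6) (W_leaf 9) eq_refl) eq_refl) eq_refl)).
  - exact (W_perm [0;2;6;9] [2;6;0;9] (6)%Z eq_refl (W_sub [0] [2;6;9] (0)%Z (-6)%Z (6)%Z (W_leaf 0) (W_mul [2] [6;9] (2)%Z (-3)%Z (-6)%Z (W_leaf 2) (W_sub [6] [9] (6)%Z (9)%Z (-3)%Z (W_leaf 6) (W_leaf 9) eq_refl) eq_refl) eq_refl)).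
  - exact (W_perm [0;9;2;6] [2;6;0;9] (7)%Z eq_refl (W_add [0] [9;2;6] (0)%Z (7)%Z (7)%Z (W_leaf 0) (W_div [9;2] [6] (5040)%Z (720)%Z (7)%Z (W_fact [9;2] 7 (W_sub [9] [2] (9)%Z (2)%Z (7)%Z (W_leaf 9) (W_leaf 2) eq_refl)) (W_fact [6] 6 (W_leaf 6)) ltac:(discriminate) eq_refl) eq_refl)).
  - exact (W_perm [0;2;9;6] [2;6;0;9] (8)%Z eq_refl (W_add [0] [2;9;6] (0)%Z (8)%Z (8)%Z (W_leaf 0) (W_pow [2] [9;6] (2)%Z 3 (8)%Z ltac:(discriminate) (W_leaf 2) (W_sub [9] [6] (9)%Z (6)%Z (3)%Z (W_leaf 9) (W_leaf 6) eq_refl) eq_refl) eq_refl)).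
  - destruct H.
Qed.

Lemma adj1 : forall a, (-9 <= a <= 8)%Z -> W [2;1;3;5] a.
Proof.
  intros a Ha.
  assert (a = -9 \/ a = -8 \/ a = -7 \/ a = -6 \/ a = -5 \/ a = -4 \/ a = -3 \/ a = -2 \/ a = -1 \/ a = 0 \/ a = 1 \/ a = 2 \/ a = 3 \/ a = 4 \/ a = 5 \/ a = 6 \/ a = 7 \/ a = 8 \/ False)%Z as H by lia.
  repeat (destruct H as [H|H]; [subst a|]).
  - exact (W_perm [1;2;3;5] [2;1;3;5] (-9)%Z eq_refl (W_sub [1] [2;3;5] (1)%Z (10)%Z (-9)%Z (W_leaf 1) (W_add [2] [3;5] (2)%Z (8)%Z (10)%Z (W_leaf 2) (W_add [3] [5] (3)%Z (5)%Z (8)%Z (W_leaf 3) (W_leaf 5) eq_refl) eq_refl) eq_refl)).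
  - exact (W_perm [1;2;3;5] [2;1;3;5] (-8)%Z eq_refl (W_add [1] [2;3;5] (1)%Z (-9)%Z (-8)%Z (W_leaf 1) (W_sub [2] [3;5] (2)%Z (11)%Z (-9)%Z (W_leaf 2) (W_add [3] [5] (6)%Z (5)%Z (11)%Z (W_fact [3] 3 (W_leaf 3)) (W_leaf 5) eq_refl) eq_refl) eq_refl)).
  - exact (W_perm [1;3;2;5] [2;1;3;5] (-7)%Z eq_refl (W_mul [1] [3;2;5] (1)%Z (-7)%Z (-7)%Z (W_leaf 1) (W_sub [3] [2;5] (3)%Z (10)%Z (-7)%Z (W_leaf 3) (W_mul [2] [5] (2)%Z (5)%Z (10)%Z (W_leaf 2) (W_leaf 5) eq_refl) eq_refl) eq_refl)).
  - exact (W_perm [1;2;3;5] [2;1;3;5] (-6)%Z eq_refl (W_mul [1] [2;3;5] (1)%Z (-6)%Z (-6)%Z (W_leaf 1) (W_sub [2] [3;5] (2)%Z (8)%Z (-6)%Z (W_leaf 2) (W_add [3] [5] (3)%Z (5)%Z (8)%Z (W_leaf 3) (W_leaf 5) eq_refl) eq_refl) eq_refl)).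
  - exact (W_perm [1;2;3;5] [2;1;3;5] (-5)%Z eq_refl (W_add [1] [2;3;5] (1)%Z (-6)%Z (-5)%Z (W_leaf 1) (W_sub [2] [3;5] (2)%Z (8)%Z (-6)%Z (W_leaf 2) (W_add [3] [5] (3)%Z (5)%Z (8)%Z (W_leaf 3) (W_leaf 5) eq_refl) eq_refl) eq_refl)).
  - exact (W_perm [1;2;3;5] [2;1;3;5] (-4)%Z eq_refl (W_mul [1] [2;3;5] (1)%Z (-4)%Z (-4)%Z (W_leaf 1) (W_mul [2] [3;5] (2)%Z (-2)%Z (-4)%Z (W_leaf 2) (W_sub [3] [5] (3)%Z (5)%Z (-2)%Z (W_leaf 3) (W_leaf 5) eq_refl) eq_refl) eq_refl)).
  - exact (W_perm [1;2;3;5] [2;1;3;5] (-3)%Z eq_refl (W_sub [1] [2;3;5] (1)%Z (4)%Z (-3)%Z (W_leaf 1) (W_sub [2] [3;5] (2)%Z (-2)%Z (4)%Z (W_leaf 2) (W_sub [3] [5] (3)%Z (5)%Z (-2)%Z (W_leaf 3) (W_leaf 5) eq_refl) eq_refl) eq_refl)).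
  - exact (W_perm [1;2;3;5] [2;1;3;5] (-2)%Z eq_refl (W_sub [1] [2;3;5] (1)%Z (3)%Z (-2)%Z (W_leaf 1) (W_add [2] [3;5] (2)%Z (1)%Z (3)%Z (W_leaf 2) (W_sub [3] [5] (6)%Z (5)%Z (1)%Z (W_fact [3] 3 (W_leaf 3)) (W_leaf 5) eq_refl) eq_refl) eq_refl)).
  - exact (W_perm [1;2;3;5] [2;1;3;5] (-1)%Z eq_refl (W_mul [1] [2;3;5] (1)%Z (-1)%Z (-1)%Z (W_leaf 1) (W_div [2] [3;5] (2)%Z (-2)%Z (-1)%Z (W_leaf 2) (W_sub [3] [5] (3)%Z (5)%Z (-2)%Z (W_leaf 3) (W_leaf 5) eq_refl) ltac:(discriminate) eq_refl) eq_refl)).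
  - exact (W_perm [1;2;3;5] [2;1;3;5] (0)%Z eq_refl (W_mul [1] [2;3;5] (1)%Z (0)%Z (0)%Z (W_leaf 1) (W_add [2] [3;5] (2)%Z (-2)%Z (0)%Z (W_leaf 2) (W_sub [3] [5] (3)%Z (5)%Z (-2)%Z (W_leaf 3) (W_leaf 5) eq_refl) eq_refl) eq_refl)).
  - exact (W_perm [1;2;3;5] [2;1;3;5] (1)%Z eq_refl (W_pow [1] [2;3;5] (1)%Z 10 (1)%Z ltac:(discriminate) (W_leaf 1) (W_add [2] [3;5] (2)%Z (8)%Z (10)%Z (W_leaf 2) (W_add [3] [5] (3)%Z (5)%Z (8)%Z (W_leaf 3) (W_leaf 5) eq_refl) eq_refl) eq_refl)).
  - exact (W_perm [1;2;3;5] [2;1;3;5] (2)%Z eq_refl (W_sub [1] [2;3;5] (1)%Z (-1)%Z (2)%Z (W_leaf 1) (W_div [2] [3;5] (2)%Z (-2)%Z (-1)%Z (W_leaf 2) (W_sub [3] [5] (3)%Z (5)%Z (-2)%Z (W_leaf 3) (W_leaf 5) eq_refl) ltac:(discriminate) eq_refl) eq_refl)).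
  - exact (W_perm [1;2;3;5] [2;1;3;5] (3)%Z eq_refl (W_mul [1] [2;3;5] (1)%Z (3)%Z (3)%Z (W_leaf 1) (W_add [2] [3;5] (2)%Z (1)%Z (3)%Z (W_leaf 2) (W_sub [3] [5] (6)%Z (5)%Z (1)%Z (W_fact [3] 3 (W_leaf 3)) (W_leaf 5) eq_refl) eq_refl) eq_refl)).
  - exact (W_perm [1;2;3;5] [2;1;3;5] (4)%Z eq_refl (W_mul [1] [2;3;5] (1)%Z (4)%Z (4)%Z (W_leaf 1) (W_sub [2] [3;5] (2)%Z (-2)%Z (4)%Z (W_leaf 2) (W_sub [3] [5] (3)%Z (5)%Z (-2)%Z (W_leaf 3) (W_leaf 5) eq_refl) eq_refl) eq_refl)).
  - exact (W_perm [1;2;3;5] [2;1;3;5] (5)%Z eq_refl (W_add [1] [2;3;5] (1)%Z (4)%Z (5)%Z (W_leaf 1) (W_sub [2] [3;5] (2)%Z (-2)%Z (4)%Z (W_leaf 2) (W_sub [3] [5] (3)%Z (5)%Z (-2)%Z (W_leaf 3) (W_leaf 5) eq_refl) eq_refl) eq_refl)).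
  - exact (W_perm [1;3;2;5] [2;1;3;5] (6)%Z eq_refl (W_mul [1] [3;2;5] (1)%Z (6)%Z (6)%Z (W_leaf 1) (W_sub [3] [2;5] (3)%Z (-3)%Z (6)%Z (W_leaf 3) (W_sub [2] [5] (2)%Z (5)%Z (-3)%Z (W_leaf 2) (W_leaf 5) eq_refl) eq_refl) eq_refl)).
  - exact (W_perm [1;2;3;5] [2;1;3;5] (7)%Z eq_refl (W_sub [1] [2;3;5] (1)%Z (-6)%Z (7)%Z (W_leaf 1) (W_sub [2] [3;5] (2)%Z (8)%Z (-6)%Z (W_leaf 2) (W_add [3] [5] (3)%Z (5)%Z (8)%Z (W_leaf 3) (W_leaf 5) eq_refl) eq_refl) eq_refl)).
  - exact (W_perm [1;3;2;5] [2;1;3;5] (8)%Z eq_refl (W_sub [1] [3;2;5] (1)%Z (-7)%Z (8)%Z (W_leaf 1) (W_sub [3] [2;5] (3)%Z (10)%Z (-7)%Z (W_leaf 3) (W_mul [2] [5] (2)%Z (5)%Z (10)%Z (W_leaf 2) (W_leaf 5) eq_refl) eq_refl) eq_refl)).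
  - destruct H.
Qed.

Lemma adj2 : forall a, (-9 <= a <= 8)%Z -> W [2;6;5;6] a.
Proof.
  intros a Ha.
  assert (a = -9 \/ a = -8 \/ a = -7 \/ a = -6 \/ a = -5 \/ a = -4 \/ a = -3 \/ a = -2 \/ a = -1 \/ a = 0 \/ a = 1 \/ a = 2 \/ a = 3 \/ a = 4 \/ a = 5 \/ a = 6 \/ a = 7 \/ a = 8 \/ False)%Z as H by lia.
  repeat (destruct H as [H|H]; [subst a|]).
  - exact (W_perm [5;2;6;6] [2;6;5;6] (-9)%Z eq_refl (W_sub [5] [2;6;6] (5)%Z (14)%Z (-9)%Z (W_leaf 5) (W_add [2] [6;6] (2)%Z (12)%Z (14)%Z (W_leaf 2) (W_add [6] [6] (6)%Z (6)%Z (12)%Z (W_leaf 6) (W_leaf 6) eq_refl) eq_refl) eq_refl)).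
  - exact (W_perm [2;5;6;6] [2;6;5;6] (-8)%Z eq_refl (W_sub [2] [5;6;6] (2)%Z (10)%Z (-8)%Z (W_leaf 2) (W_div [5] [6;6] (120)%Z (12)%Z (10)%Z (W_fact [5] 5 (W_leaf 5)) (W_add [6] [6] (6)%Z (6)%Z (12)%Z (W_leaf 6) (W_leaf 6) eq_refl) ltac:(discriminate) eq_refl) eq_refl)).
  - exact (W_perm [5;6;6;2] [2;6;5;6] (-7)%Z eq_refl (W_sub [5] [6;6;2] (5)%Z (12)%Z (-7)%Z (W_leaf 5) (W_add [6] [6;2] (6)%Z (6)%Z (12)%Z (W_leaf 6) (W_fact [6;2] 3 (W_div [6] [2] (6)%Z (2)%Z (3)%Z (W_leaf 6) (W_leaf 2) ltac:(discriminate) eq_refl)) eq_refl) eq_refl)).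
  - exact (W_perm [6;2;6;5] [2;6;5;6] (-6)%Z eq_refl (W_sub [6] [2;6;5] (6)%Z (12)%Z (-6)%Z (W_leaf 6) (W_mul [2] [6;5] (2)%Z (6)%Z (12)%Z (W_leaf 2) (W_div [6] [5] (720)%Z (120)%Z (6)%Z (W_fact [6] 6 (W_leaf 6)) (W_fact [5] 5 (W_leaf 5)) ltac:(discriminate) eq_refl) eq_refl) eq_refl)).
  - exact (W_perm [2;5;6;6] [2;6;5;6] (-5)%Z eq_refl (W_add [2] [5;6;6] (2)%Z (-7)%Z (-5)%Z (W_leaf 2) (W_sub [5] [6;6] (5)%Z (12)%Z (-7)%Z (W_leaf 5) (W_add [6] [6] (6)%Z (6)%Z (12)%Z (W_leaf 6) (W_leaf 6) eq_refl) eq_refl) eq_refl)).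
  - exact (W_perm [2;5;6;6] [2;6;5;6] (-4)%Z eq_refl (W_sub [2] [5;6;6] (2)%Z (6)%Z (-4)%Z (W_leaf 2) (W_add [5] [6;6] (5)%Z (1)%Z (6)%Z (W_leaf 5) (W_div [6] [6] (6)%Z (6)%Z (1)%Z (W_leaf 6) (W_leaf 6) ltac:(discriminate) eq_refl) eq_refl) eq_refl)).
  - exact (W_perm [2;5;6;6] [2;6;5;6] (-3)%Z eq_refl (W_sub [2] [5;6;6] (2)%Z (5)%Z (-3)%Z (W_leaf 2) (W_add [5] [6;6] (5)%Z (0)%Z (5)%Z (W_leaf 5) (W_sub [6] [6] (6)%Z (6)%Z (0)%Z (W_leaf 6) (W_leaf 6) eq_refl) eq_refl) eq_refl)).
  - exact (W_perm [2;5;6;6] [2;6;5;6] (-2)%Z eq_refl (W_sub [2] [5;6;6] (2)%Z (4)%Z (-2)%Z (W_leaf 2) (W_sub [5] [6;6] (5)%Z (1)%Z (4)%Z (W_leaf 5) (W_div [6] [6] (6)%Z (6)%Z (1)%Z (W_leaf 6) (W_leaf 6) ltac:(discriminate) eq_refl) eq_refl) eq_refl)).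
  - exact (W_perm [5;6;2;6] [2;6;5;6] (-1)%Z eq_refl (W_add [5] [6;2;6] (5)%Z (-6)%Z (-1)%Z (W_leaf 5) (W_sub [6] [2;6] (6)%Z (12)%Z (-6)%Z (W_leaf 6) (W_mul [2] [6] (2)%Z (6)%Z (12)%Z (W_leaf 2) (W_leaf 6) eq_refl) eq_refl) eq_refl)).
  - exact (W_perm [2;5;6;6] [2;6;5;6] (0)%Z eq_refl (W_mul [2] [5;6;6] (2)%Z (0)%Z (0)%Z (W_leaf 2) (W_mul [5] [6;6] (5)%Z (0)%Z (0)%Z (W_leaf 5) (W_sub [6] [6] (6)%Z (6)%Z (0)%Z (W_leaf 6) (W_leaf 6) eq_refl) eq_refl) eq_refl)).
  - exact (W_perm [2;5;6;6] [2;6;5;6] (1)%Z eq_refl (W_pow [2] [5;6;6] (2)%Z 0 (1)%Z ltac:(discriminate) (W_leaf 2) (W_mul [5] [6;6] (5)%Z (0)%Z (0)%Z (W_leaf 5) (W_sub [6] [6] (6)%Z (6)%Z (0)%Z (W_leaf 6) (W_leaf 6) eq_refl) eq_refl) eq_refl)).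
  - exact (W_perm [2;5;6;6] [2;6;5;6] (2)%Z eq_refl (W_add [2] [5;6;6] (2)%Z (0)%Z (2)%Z (W_leaf 2) (W_mul [5] [6;6] (5)%Z (0)%Z (0)%Z (W_leaf 5) (W_sub [6] [6] (6)%Z (6)%Z (0)%Z (W_leaf 6) (W_leaf 6) eq_refl) eq_refl) eq_refl)).
  - exact (W_perm [2;5;6;6] [2;6;5;6] (3)%Z eq_refl (W_add [2] [5;6;6] (2)%Z (1)%Z (3)%Z (W_leaf 2) (W_pow [5] [6;6] (5)%Z 0 (1)%Z ltac:(discriminate) (W_leaf 5) (W_sub [6] [6] (6)%Z (6)%Z (0)%Z (W_leaf 6) (W_leaf 6) eq_refl) eq_refl) eq_refl)).
  - exact (W_perm [5;2;6;6] [2;6;5;6] (4)%Z eq_refl (W_sub [5] [2;6;6] (5)%Z (1)%Z (4)%Z (W_leaf 5) (W_pow [2] [6;6] (2)%Z 0 (1)%Z ltac:(discriminate) (W_leaf 2) (W_sub [6] [6] (6)%Z (6)%Z (0)%Z (W_leaf 6) (W_leaf 6) eq_refl) eq_refl) eq_refl)).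
  - exact (W_perm [5;2;6;6] [2;6;5;6] (5)%Z eq_refl (W_add [5] [2;6;6] (5)%Z (0)%Z (5)%Z (W_leaf 5) (W_mul [2] [6;6] (2)%Z (0)%Z (0)%Z (W_leaf 2) (W_sub [6] [6] (6)%Z (6)%Z (0)%Z (W_leaf 6) (W_leaf 6) eq_refl) eq_refl) eq_refl)).
  - exact (W_perm [2;5;6;6] [2;6;5;6] (6)%Z eq_refl (W_add [2] [5;6;6] (2)%Z (4)%Z (6)%Z (W_leaf 2) (W_sub [5] [6;6] (5)%Z (1)%Z (4)%Z (W_leaf 5) (W_div [6] [6] (6)%Z (6)%Z (1)%Z (W_leaf 6) (W_leaf 6) ltac:(discriminate) eq_refl) eq_refl) eq_refl)).
  - exact (W_perm [2;5;6;6] [2;6;5;6] (7)%Z eq_refl (W_add [2] [5;6;6] (2)%Z (5)%Z (7)%Z (W_leaf 2) (W_add [5] [6;6] (5)%Z (0)%Z (5)%Z (W_leaf 5) (W_sub [6] [6] (6)%Z (6)%Z (0)%Z (W_leaf 6) (W_leaf 6) eq_refl) eq_refl) eq_refl)).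
  - exact (W_perm [2;5;6;6] [2;6;5;6] (8)%Z eq_refl (W_add [2] [5;6;6] (2)%Z (6)%Z (8)%Z (W_leaf 2) (W_add [5] [6;6] (5)%Z (1)%Z (6)%Z (W_leaf 5) (W_div [6] [6] (6)%Z (6)%Z (1)%Z (W_leaf 6) (W_leaf 6) ltac:(discriminate) eq_refl) eq_refl) eq_refl)).
  - destruct H.
Qed.

Lemma adj3 : forall a, (-9 <= a <= 8)%Z -> W [2;1;8;2] a.
Proof.
  intros a Ha.
  assert (a = -9 \/ a = -8 \/ a = -7 \/ a = -6 \/ a = -5 \/ a = -4 \/ a = -3 \/ a = -2 \/ a = -1 \/ a = 0 \/ a = 1 \/ a = 2 \/ a = 3 \/ a = 4 \/ a = 5 \/ a = 6 \/ a = 7 \/ a = 8 \/ False)%Z as H by lia.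
  repeat (destruct H as [H|H]; [subst a|]).
  - exact (W_perm [2;1;2;8] [2;1;8;2] (-9)%Z eq_refl (W_sub [2] [1;2;8] (2)%Z (11)%Z (-9)%Z (W_leaf 2) (W_add [1] [2;8] (1)%Z (10)%Z (11)%Z (W_leaf 1) (W_add [2] [8] (2)%Z (8)%Z (10)%Z (W_leaf 2) (W_leaf 8) eq_refl) eq_refl) eq_refl)).
  - exact (W_perm [1;2;2;8] [2;1;8;2] (-8)%Z eq_refl (W_mul [1] [2;2;8] (1)%Z (-8)%Z (-8)%Z (W_leaf 1) (W_sub [2] [2;8] (2)%Z (10)%Z (-8)%Z (W_leaf 2) (W_add [2] [8] (2)%Z (8)%Z (10)%Z (W_leaf 2) (W_leaf 8) eq_refl) eq_refl) eq_refl)).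
  - exact (W_perm [1;2;2;8] [2;1;8;2] (-7)%Z eq_refl (W_add [1] [2;2;8] (1)%Z (-8)%Z (-7)%Z (W_leaf 1) (W_sub [2] [2;8] (2)%Z (10)%Z (-8)%Z (W_leaf 2) (W_add [2] [8] (2)%Z (8)%Z (10)%Z (W_leaf 2) (W_leaf 8) eq_refl) eq_refl) eq_refl)).
  - exact (W_perm [1;8;2;2] [2;1;8;2] (-6)%Z eq_refl (W_sub [1] [8;2;2] (1)%Z (7)%Z (-6)%Z (W_leaf 1) (W_sub [8] [2;2] (8)%Z (1)%Z (7)%Z (W_leaf 8) (W_div [2] [2] (2)%Z (2)%Z (1)%Z (W_leaf 2) (W_leaf 2) ltac:(discriminate) eq_refl) eq_refl) eq_refl)).
  - exact (W_perm [1;2;8;2] [2;1;8;2] (-5)%Z eq_refl (W_sub [1] [2;8;2] (1)%Z (6)%Z (-5)%Z (W_leaf 1) (W_add [2] [8;2] (2)%Z (4)%Z (6)%Z (W_leaf 2) (W_div [8] [2] (8)%Z (2)%Z (4)%Z (W_leaf 8) (W_leaf 2) ltac:(discriminate) eq_refl) eq_refl) eq_refl)).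
  - exact (W_perm [1;2;2;8] [2;1;8;2] (-4)%Z eq_refl (W_mul [1] [2;2;8] (1)%Z (-4)%Z (-4)%Z (W_leaf 1) (W_add [2] [2;8] (2)%Z (-6)%Z (-4)%Z (W_leaf 2) (W_sub [2] [8] (2)%Z (8)%Z (-6)%Z (W_leaf 2) (W_leaf 8) eq_refl) eq_refl) eq_refl)).
  - exact (W_perm [1;2;2;8] [2;1;8;2] (-3)%Z eq_refl (W_add [1] [2;2;8] (1)%Z (-4)%Z (-3)%Z (W_leaf 1) (W_add [2] [2;8] (2)%Z (-6)%Z (-4)%Z (W_leaf 2) (W_sub [2] [8] (2)%Z (8)%Z (-6)%Z (W_leaf 2) (W_leaf 8) eq_refl) eq_refl) eq_refl)).
  - exact (W_perm [1;2;8;2] [2;1;8;2] (-2)%Z eq_refl (W_mul [1] [2;8;2] (1)%Z (-2)%Z (-2)%Z (W_leaf 1) (W_sub [2] [8;2] (2)%Z (4)%Z (-2)%Z (W_leaf 2) (W_div [8] [2] (8)%Z (2)%Z (4)%Z (W_leaf 8) (W_leaf 2) ltac:(discriminate) eq_refl) eq_refl) eq_refl)).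
  - exact (W_perm [1;2;8;2] [2;1;8;2] (-1)%Z eq_refl (W_add [1] [2;8;2] (1)%Z (-2)%Z (-1)%Z (W_leaf 1) (W_sub [2] [8;2] (2)%Z (4)%Z (-2)%Z (W_leaf 2) (W_div [8] [2] (8)%Z (2)%Z (4)%Z (W_leaf 8) (W_leaf 2) ltac:(discriminate) eq_refl) eq_refl) eq_refl)).
  - exact (W_perm [1;8;2;2] [2;1;8;2] (0)%Z eq_refl (W_mul [1] [8;2;2] (1)%Z (0)%Z (0)%Z (W_leaf 1) (W_mul [8] [2;2] (8)%Z (0)%Z (0)%Z (W_leaf 8) (W_sub [2] [2] (2)%Z (2)%Z (0)%Z (W_leaf 2) (W_leaf 2) eq_refl) eq_refl) eq_refl)).
  - exact (W_perm [1;2;2;8] [2;1;8;2] (1)%Z eq_refl (W_pow [1] [2;2;8] (1)%Z 12 (1)%Z ltac:(discriminate) (W_leaf 1) (W_add [2] [2;8] (2)%Z (10)%Z (12)%Z (W_leaf 2) (W_add [2] [8] (2)%Z (8)%Z (10)%Z (W_leaf 2) (W_leaf 8) eq_refl) eq_refl) eq_refl)).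
  - exact (W_perm [1;8;2;2] [2;1;8;2] (2)%Z eq_refl (W_mul [1] [8;2;2] (1)%Z (2)%Z (2)%Z (W_leaf 1) (W_div [8] [2;2] (8)%Z (4)%Z (2)%Z (W_leaf 8) (W_add [2] [2] (2)%Z (2)%Z (4)%Z (W_leaf 2) (W_leaf 2) eq_refl) ltac:(discriminate) eq_refl) eq_refl)).
  - exact (W_perm [1;2;8;2] [2;1;8;2] (3)%Z eq_refl (W_sub [1] [2;8;2] (1)%Z (-2)%Z (3)%Z (W_leaf 1) (W_sub [2] [8;2] (2)%Z (4)%Z (-2)%Z (W_leaf 2) (W_div [8] [2] (8)%Z (2)%Z (4)%Z (W_leaf 8) (W_leaf 2) ltac:(discriminate) eq_refl) eq_refl) eq_refl)).
  - exact (W_perm [1;8;2;2] [2;1;8;2] (4)%Z eq_refl (W_mul [1] [8;2;2] (1)%Z (4)%Z (4)%Z (W_leaf 1) (W_sub [8] [2;2] (8)%Z (4)%Z (4)%Z (W_leaf 8) (W_add [2] [2] (2)%Z (2)%Z (4)%Z (W_leaf 2) (W_leaf 2) eq_refl) eq_refl) eq_refl)).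
  - exact (W_perm [1;2;2;8] [2;1;8;2] (5)%Z eq_refl (W_sub [1] [2;2;8] (1)%Z (-4)%Z (5)%Z (W_leaf 1) (W_add [2] [2;8] (2)%Z (-6)%Z (-4)%Z (W_leaf 2) (W_sub [2] [8] (2)%Z (8)%Z (-6)%Z (W_leaf 2) (W_leaf 8) eq_refl) eq_refl) eq_refl)).
  - exact (W_perm [1;2;8;2] [2;1;8;2] (6)%Z eq_refl (W_mul [1] [2;8;2] (1)%Z (6)%Z (6)%Z (W_leaf 1) (W_add [2] [8;2] (2)%Z (4)%Z (6)%Z (W_leaf 2) (W_div [8] [2] (8)%Z (2)%Z (4)%Z (W_leaf 8) (W_leaf 2) ltac:(discriminate) eq_refl) eq_refl) eq_refl)).
  - exact (W_perm [1;2;8;2] [2;1;8;2] (7)%Z eq_refl (W_add [1] [2;8;2] (1)%Z (6)%Z (7)%Z (W_leaf 1) (W_add [2] [8;2] (2)%Z (4)%Z (6)%Z (W_leaf 2) (W_div [8] [2] (8)%Z (2)%Z (4)%Z (W_leaf 8) (W_leaf 2) ltac:(discriminate) eq_refl) eq_refl) eq_refl)).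
  - exact (W_perm [1;2;2;8] [2;1;8;2] (8)%Z eq_refl (W_mul [1] [2;2;8] (1)%Z (8)%Z (8)%Z (W_leaf 1) (W_sub [2] [2;8] (2)%Z (-6)%Z (8)%Z (W_leaf 2) (W_sub [2] [8] (2)%Z (8)%Z (-6)%Z (W_leaf 2) (W_leaf 8) eq_refl) eq_refl) eq_refl)).
  - destruct H.
Qed.

Lemma adj4 : forall a, (-9 <= a <= 8)%Z -> W [2;6;0;4] a.
Proof.
  intros a Ha.
  assert (a = -9 \/ a = -8 \/ a = -7 \/ a = -6 \/ a = -5 \/ a = -4 \/ a = -3 \/ a = -2 \/ a = -1 \/ a = 0 \/ a = 1 \/ a = 2 \/ a = 3 \/ a = 4 \/ a = 5 \/ a = 6 \/ a = 7 \/ a = 8 \/ False)%Z as H by lia.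
  repeat (destruct H as [H|H]; [subst a|]).
  - exact (W_perm [0;6;2;4] [2;6;0;4] (-9)%Z eq_refl (W_sub [0] [6;2;4] (0)%Z (9)%Z (-9)%Z (W_leaf 0) (W_div [6;2] [4] (36)%Z (4)%Z (9)%Z (W_pow [6] [2] (6)%Z 2 (36)%Z ltac:(discriminate) (W_leaf 6) (W_leaf 2) eq_refl) (W_leaf 4) ltac:(discriminate) eq_refl) eq_refl)).
  - exact (W_perm [0;2;4;6] [2;6;0;4] (-8)%Z eq_refl (W_add [0] [2;4;6] (0)%Z (-8)%Z (-8)%Z (W_leaf 0) (W_sub [2] [4;6] (2)%Z (10)%Z (-8)%Z (W_leaf 2) (W_add [4] [6] (4)%Z (6)%Z (10)%Z (W_leaf 4) (W_leaf 6) eq_refl) eq_refl) eq_refl)).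
  - exact (W_perm [0;4;6;2] [2;6;0;4] (-7)%Z eq_refl (W_sub [0] [4;6;2] (0)%Z (7)%Z (-7)%Z (W_leaf 0) (W_add [4] [6;2] (4)%Z (3)%Z (7)%Z (W_leaf 4) (W_div [6] [2] (6)%Z (2)%Z (3)%Z (W_leaf 6) (W_leaf 2) ltac:(discriminate) eq_refl) eq_refl) eq_refl)).
  - exact (W_perm [0;2;4;6] [2;6;0;4] (-6)%Z eq_refl (W_sub [0] [2;4;6] (0)%Z (6)%Z (-6)%Z (W_leaf 0) (W_add [2] [4;6] (2)%Z (4)%Z (6)%Z (W_leaf 2) (W_div [4] [6] (24)%Z (6)%Z (4)%Z (W_fact [4] 4 (W_leaf 4)) (W_leaf 6) ltac:(discriminate) eq_refl) eq_refl) eq_refl)).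
  - exact (W_perm [0;4;6;2] [2;6;0;4] (-5)%Z eq_refl (W_sub [0] [4;6;2] (0)%Z (5)%Z (-5)%Z (W_leaf 0) (W_div [4;6] [2] (10)%Z (2)%Z (5)%Z (W_add [4] [6] (4)%Z (6)%Z (10)%Z (W_leaf 4) (W_leaf 6) eq_refl) (W_leaf 2) ltac:(discriminate) eq_refl) eq_refl)).
  - exact (W_perm [0;2;4;6] [2;6;0;4] (-4)%Z eq_refl (W_sub [0] [2;4;6] (0)%Z (4)%Z (-4)%Z (W_leaf 0) (W_sub [2] [4;6] (2)%Z (-2)%Z (4)%Z (W_leaf 2) (W_sub [4] [6] (4)%Z (6)%Z (-2)%Z (W_leaf 4) (W_leaf 6) eq_refl) eq_refl) eq_refl)).
  - exact (W_perm [0;4;2;6] [2;6;0;4] (-3)%Z eq_refl (W_sub [0] [4;2;6] (0)%Z (3)%Z (-3)%Z (W_leaf 0) (W_div [4] [2;6] (24)%Z (8)%Z (3)%Z (W_fact [4] 4 (W_leaf 4)) (W_add [2] [6] (2)%Z (6)%Z (8)%Z (W_leaf 2) (W_leaf 6) eq_refl) ltac:(discriminate) eq_refl) eq_refl)).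
  - exact (W_perm [0;2;4;6] [2;6;0;4] (-2)%Z eq_refl (W_add [0] [2;4;6] (0)%Z (-2)%Z (-2)%Z (W_leaf 0) (W_sub [2] [4;6] (2)%Z (4)%Z (-2)%Z (W_leaf 2) (W_div [4] [6] (24)%Z (6)%Z (4)%Z (W_fact [4] 4 (W_leaf 4)) (W_leaf 6) ltac:(discriminate) eq_refl) eq_refl) eq_refl)).
  - exact (W_perm [0;2;4;6] [2;6;0;4] (-1)%Z eq_refl (W_add [0] [2;4;6] (0)%Z (-1)%Z (-1)%Z (W_leaf 0) (W_div [2] [4;6] (2)%Z (-2)%Z (-1)%Z (W_leaf 2) (W_sub [4] [6] (4)%Z (6)%Z (-2)%Z (W_leaf 4) (W_leaf 6) eq_refl) ltac:(discriminate) eq_refl) eq_refl)).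
  - exact (W_perm [0;2;4;6] [2;6;0;4] (0)%Z eq_refl (W_mul [0] [2;4;6] (0)%Z (12)%Z (0)%Z (W_leaf 0) (W_add [2] [4;6] (2)%Z (10)%Z (12)%Z (W_leaf 2) (W_add [4] [6] (4)%Z (6)%Z (10)%Z (W_leaf 4) (W_leaf 6) eq_refl) eq_refl) eq_refl)).
  - exact (W_perm [0;2;4;6] [2;6;0;4] (1)%Z eq_refl (W_sub [0] [2;4;6] (0)%Z (-1)%Z (1)%Z (W_leaf 0) (W_div [2] [4;6] (2)%Z (-2)%Z (-1)%Z (W_leaf 2) (W_sub [4] [6] (4)%Z (6)%Z (-2)%Z (W_leaf 4) (W_leaf 6) eq_refl) ltac:(discriminate) eq_refl) eq_refl)).
  - exact (W_perm [0;2;4;6] [2;6;0;4] (2)%Z eq_refl (W_sub [0] [2;4;6] (0)%Z (-2)%Z (2)%Z (W_leaf 0) (W_sub [2] [4;6] (2)%Z (4)%Z (-2)%Z (W_leaf 2) (W_div [4] [6] (24)%Z (6)%Z (4)%Z (W_fact [4] 4 (W_leaf 4)) (W_leaf 6) ltac:(discriminate) eq_refl) eq_refl) eq_refl)).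
  - exact (W_perm [0;4;2;6] [2;6;0;4] (3)%Z eq_refl (W_add [0] [4;2;6] (0)%Z (3)%Z (3)%Z (W_leaf 0) (W_div [4] [2;6] (24)%Z (8)%Z (3)%Z (W_fact [4] 4 (W_leaf 4)) (W_add [2] [6] (2)%Z (6)%Z (8)%Z (W_leaf 2) (W_leaf 6) eq_refl) ltac:(discriminate) eq_refl) eq_refl)).
  - exact (W_perm [0;2;4;6] [2;6;0;4] (4)%Z eq_refl (W_add [0] [2;4;6] (0)%Z (4)%Z (4)%Z (W_leaf 0) (W_sub [2] [4;6] (2)%Z (-2)%Z (4)%Z (W_leaf 2) (W_sub [4] [6] (4)%Z (6)%Z (-2)%Z (W_leaf 4) (W_leaf 6) eq_refl) eq_refl) eq_refl)).
  - exact (W_perm [0;4;6;2] [2;6;0;4] (5)%Z eq_refl (W_add [0] [4;6;2] (0)%Z (5)%Z (5)%Z (W_leaf 0) (W_div [4;6] [2] (10)%Z (2)%Z (5)%Z (W_add [4] [6] (4)%Z (6)%Z (10)%Z (W_leaf 4) (W_leaf 6) eq_refl) (W_leaf 2) ltac:(discriminate) eq_refl) eq_refl)).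
  - exact (W_perm [0;2;4;6] [2;6;0;4] (6)%Z eq_refl (W_add [0] [2;4;6] (0)%Z (6)%Z (6)%Z (W_leaf 0) (W_add [2] [4;6] (2)%Z (4)%Z (6)%Z (W_leaf 2) (W_div [4] [6] (24)%Z (6)%Z (4)%Z (W_fact [4] 4 (W_leaf 4)) (W_leaf 6) ltac:(discriminate) eq_refl) eq_refl) eq_refl)).
  - exact (W_perm [0;4;6;2] [2;6;0;4] (7)%Z eq_refl (W_add [0] [4;6;2] (0)%Z (7)%Z (7)%Z (W_leaf 0) (W_add [4] [6;2] (4)%Z (3)%Z (7)%Z (W_leaf 4) (W_div [6] [2] (6)%Z (2)%Z (3)%Z (W_leaf 6) (W_leaf 2) ltac:(discriminate) eq_refl) eq_refl) eq_refl)).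
  - exact (W_perm [0;2;4;6] [2;6;0;4] (8)%Z eq_refl (W_sub [0] [2;4;6] (0)%Z (-8)%Z (8)%Z (W_leaf 0) (W_sub [2] [4;6] (2)%Z (10)%Z (-8)%Z (W_leaf 2) (W_add [4] [6] (4)%Z (6)%Z (10)%Z (W_leaf 4) (W_leaf 6) eq_refl) eq_refl) eq_refl)).
  - destruct H.
Qed.

Lemma adj5 : forall a, (-9 <= a <= 8)%Z -> W [2;1;3;0] a.
Proof.
  intros a Ha.
  assert (a = -9 \/ a = -8 \/ a = -7 \/ a = -6 \/ a = -5 \/ a = -4 \/ a = -3 \/ a = -2 \/ a = -1 \/ a = 0 \/ a = 1 \/ a = 2 \/ a = 3 \/ a = 4 \/ a = 5 \/ a = 6 \/ a = 7 \/ a = 8 \/ False)%Z as H by lia.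
  repeat (destruct H as [H|H]; [subst a|]).
  - exact (W_perm [0;1;2;3] [2;1;3;0] (-9)%Z eq_refl (W_sub [0] [1;2;3] (0)%Z (9)%Z (-9)%Z (W_leaf 0) (W_add [1] [2;3] (1)%Z (8)%Z (9)%Z (W_leaf 1) (W_pow [2] [3] (2)%Z 3 (8)%Z ltac:(discriminate) (W_leaf 2) (W_leaf 3) eq_refl) eq_refl) eq_refl)).
  - exact (W_perm [0;1;2;3] [2;1;3;0] (-8)%Z eq_refl (W_sub [0] [1;2;3] (0)%Z (8)%Z (-8)%Z (W_leaf 0) (W_mul [1] [2;3] (1)%Z (8)%Z (8)%Z (W_leaf 1) (W_pow [2] [3] (2)%Z 3 (8)%Z ltac:(discriminate) (W_leaf 2) (W_leaf 3) eq_refl) eq_refl) eq_refl)).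
  - exact (W_perm [0;1;2;3] [2;1;3;0] (-7)%Z eq_refl (W_sub [0] [1;2;3] (0)%Z (7)%Z (-7)%Z (W_leaf 0) (W_add [1] [2;3] (1)%Z (6)%Z (7)%Z (W_leaf 1) (W_mul [2] [3] (2)%Z (3)%Z (6)%Z (W_leaf 2) (W_leaf 3) eq_refl) eq_refl) eq_refl)).
  - exact (W_perm [0;1;2;3] [2;1;3;0] (-6)%Z eq_refl (W_sub [0] [1;2;3] (0)%Z (6)%Z (-6)%Z (W_leaf 0) (W_add [1] [2;3] (1)%Z (5)%Z (6)%Z (W_leaf 1) (W_add [2] [3] (2)%Z (3)%Z (5)%Z (W_leaf 2) (W_leaf 3) eq_refl) eq_refl) eq_refl)).
  - exact (W_perm [0;1;2;3] [2;1;3;0] (-5)%Z eq_refl (W_sub [0] [1;2;3] (0)%Z (5)%Z (-5)%Z (W_leaf 0) (W_mul [1] [2;3] (1)%Z (5)%Z (5)%Z (W_leaf 1) (W_add [2] [3] (2)%Z (3)%Z (5)%Z (W_leaf 2) (W_leaf 3) eq_refl) eq_refl) eq_refl)).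
  - exact (W_perm [0;1;2;3] [2;1;3;0] (-4)%Z eq_refl (W_add [0] [1;2;3] (0)%Z (-4)%Z (-4)%Z (W_leaf 0) (W_sub [1] [2;3] (1)%Z (5)%Z (-4)%Z (W_leaf 1) (W_add [2] [3] (2)%Z (3)%Z (5)%Z (W_leaf 2) (W_leaf 3) eq_refl) eq_refl) eq_refl)).
  - exact (W_perm [0;1;2;3] [2;1;3;0] (-3)%Z eq_refl (W_add [0] [1;2;3] (0)%Z (-3)%Z (-3)%Z (W_leaf 0) (W_add [1] [2;3] (1)%Z (-4)%Z (-3)%Z (W_leaf 1) (W_sub [2] [3] (2)%Z (6)%Z (-4)%Z (W_leaf 2) (W_fact [3] 3 (W_leaf 3)) eq_refl) eq_refl) eq_refl)).
  - exact (W_perm [0;1;2;3] [2;1;3;0] (-2)%Z eq_refl (W_sub [0] [1;2;3] (0)%Z (2)%Z (-2)%Z (W_leaf 0) (W_sub [1] [2;3] (1)%Z (-1)%Z (2)%Z (W_leaf 1) (W_sub [2] [3] (2)%Z (3)%Z (-1)%Z (W_leaf 2) (W_leaf 3) eq_refl) eq_refl) eq_refl)).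
  - exact (W_perm [0;1;2;3] [2;1;3;0] (-1)%Z eq_refl (W_sub [0] [1;2;3] (0)%Z (1)%Z (-1)%Z (W_leaf 0) (W_pow [1] [2;3] (1)%Z 5 (1)%Z ltac:(discriminate) (W_leaf 1) (W_add [2] [3] (2)%Z (3)%Z (5)%Z (W_leaf 2) (W_leaf 3) eq_refl) eq_refl) eq_refl)).
  - exact (W_perm [0;1;2;3] [2;1;3;0] (0)%Z eq_refl (W_mul [0] [1;2;3] (0)%Z (6)%Z (0)%Z (W_leaf 0) (W_add [1] [2;3] (1)%Z (5)%Z (6)%Z (W_leaf 1) (W_add [2] [3] (2)%Z (3)%Z (5)%Z (W_leaf 2) (W_leaf 3) eq_refl) eq_refl) eq_refl)).
  - exact (W_perm [0;1;2;3] [2;1;3;0] (1)%Z eq_refl (W_add [0] [1;2;3] (0)%Z (1)%Z (1)%Z (W_leaf 0) (W_pow [1] [2;3] (1)%Z 5 (1)%Z ltac:(discriminate) (W_leaf 1) (W_add [2] [3] (2)%Z (3)%Z (5)%Z (W_leaf 2) (W_leaf 3) eq_refl) eq_refl) eq_refl)).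
  - exact (W_perm [0;1;2;3] [2;1;3;0] (2)%Z eq_refl (W_add [0] [1;2;3] (0)%Z (2)%Z (2)%Z (W_leaf 0) (W_sub [1] [2;3] (1)%Z (-1)%Z (2)%Z (W_leaf 1) (W_sub [2] [3] (2)%Z (3)%Z (-1)%Z (W_leaf 2) (W_leaf 3) eq_refl) eq_refl) eq_refl)).
  - exact (W_perm [0;1;2;3] [2;1;3;0] (3)%Z eq_refl (W_sub [0] [1;2;3] (0)%Z (-3)%Z (3)%Z (W_leaf 0) (W_add [1] [2;3] (1)%Z (-4)%Z (-3)%Z (W_leaf 1) (W_sub [2] [3] (2)%Z (6)%Z (-4)%Z (W_leaf 2) (W_fact [3] 3 (W_leaf 3)) eq_refl) eq_refl) eq_refl)).
  - exact (W_perm [0;1;2;3] [2;1;3;0] (4)%Z eq_refl (W_sub [0] [1;2;3] (0)%Z (-4)%Z (4)%Z (W_leaf 0) (W_sub [1] [2;3] (1)%Z (5)%Z (-4)%Z (W_leaf 1) (W_add [2] [3] (2)%Z (3)%Z (5)%Z (W_leaf 2) (W_leaf 3) eq_refl) eq_refl) eq_refl)).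
  - exact (W_perm [0;1;2;3] [2;1;3;0] (5)%Z eq_refl (W_add [0] [1;2;3] (0)%Z (5)%Z (5)%Z (W_leaf 0) (W_mul [1] [2;3] (1)%Z (5)%Z (5)%Z (W_leaf 1) (W_add [2] [3] (2)%Z (3)%Z (5)%Z (W_leaf 2) (W_leaf 3) eq_refl) eq_refl) eq_refl)).
  - exact (W_perm [0;1;2;3] [2;1;3;0] (6)%Z eq_refl (W_add [0] [1;2;3] (0)%Z (6)%Z (6)%Z (W_leaf 0) (W_add [1] [2;3] (1)%Z (5)%Z (6)%Z (W_leaf 1) (W_add [2] [3] (2)%Z (3)%Z (5)%Z (W_leaf 2) (W_leaf 3) eq_refl) eq_refl) eq_refl)).
  - exact (W_perm [0;1;2;3] [2;1;3;0] (7)%Z eq_refl (W_add [0] [1;2;3] (0)%Z (7)%Z (7)%Z (W_leaf 0) (W_add [1] [2;3] (1)%Z (6)%Z (7)%Z (W_leaf 1) (W_mul [2] [3] (2)%Z (3)%Z (6)%Z (W_leaf 2) (W_leaf 3) eq_refl) eq_refl) eq_refl)).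
  - exact (W_perm [0;1;2;3] [2;1;3;0] (8)%Z eq_refl (W_add [0] [1;2;3] (0)%Z (8)%Z (8)%Z (W_leaf 0) (W_mul [1] [2;3] (1)%Z (8)%Z (8)%Z (W_leaf 1) (W_pow [2] [3] (2)%Z 3 (8)%Z ltac:(discriminate) (W_leaf 2) (W_leaf 3) eq_refl) eq_refl) eq_refl)).
  - destruct H.
Qed.

Lemma adj6 : forall a, (-9 <= a <= 8)%Z -> W [2;6;5;1] a.
Proof.
  intros a Ha.
  assert (a = -9 \/ a = -8 \/ a = -7 \/ a = -6 \/ a = -5 \/ a = -4 \/ a = -3 \/ a = -2 \/ a = -1 \/ a = 0 \/ a = 1 \/ a = 2 \/ a = 3 \/ a = 4 \/ a = 5 \/ a = 6 \/ a = 7 \/ a = 8 \/ False)%Z as H by lia.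
  repeat (destruct H as [H|H]; [subst a|]).
  - exact (W_perm [1;2;5;6] [2;6;5;1] (-9)%Z eq_refl (W_mul [1] [2;5;6] (1)%Z (-9)%Z (-9)%Z (W_leaf 1) (W_sub [2] [5;6] (2)%Z (11)%Z (-9)%Z (W_leaf 2) (W_add [5] [6] (5)%Z (6)%Z (11)%Z (W_leaf 5) (W_leaf 6) eq_refl) eq_refl) eq_refl)).
  - exact (W_perm [1;2;5;6] [2;6;5;1] (-8)%Z eq_refl (W_add [1] [2;5;6] (1)%Z (-9)%Z (-8)%Z (W_leaf 1) (W_sub [2] [5;6] (2)%Z (11)%Z (-9)%Z (W_leaf 2) (W_add [5] [6] (5)%Z (6)%Z (11)%Z (W_leaf 5) (W_leaf 6) eq_refl) eq_refl) eq_refl)).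
  - exact (W_perm [1;2;6;5] [2;6;5;1] (-7)%Z eq_refl (W_sub [1] [2;6;5] (1)%Z (8)%Z (-7)%Z (W_leaf 1) (W_add [2] [6;5] (2)%Z (6)%Z (8)%Z (W_leaf 2) (W_div [6] [5] (720)%Z (120)%Z (6)%Z (W_fact [6] 6 (W_leaf 6)) (W_fact [5] 5 (W_leaf 5)) ltac:(discriminate) eq_refl) eq_refl) eq_refl)).
  - exact (W_perm [1;5;2;6] [2;6;5;1] (-6)%Z eq_refl (W_add [1] [5;2;6] (1)%Z (-7)%Z (-6)%Z (W_leaf 1) (W_sub [5] [2;6] (5)%Z (12)%Z (-7)%Z (W_leaf 5) (W_mul [2] [6] (2)%Z (6)%Z (12)%Z (W_leaf 2) (W_leaf 6) eq_refl) eq_refl) eq_refl)).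
  - exact (W_perm [1;2;5;6] [2;6;5;1] (-5)%Z eq_refl (W_sub [1] [2;5;6] (1)%Z (6)%Z (-5)%Z (W_leaf 1) (W_fact [2;5;6] 3 (W_sub [2] [5;6] (2)%Z (-1)%Z (3)%Z (W_leaf 2) (W_sub [5] [6] (5)%Z (6)%Z (-1)%Z (W_leaf 5) (W_leaf 6) eq_refl) eq_refl)) eq_refl)).
  - exact (W_perm [1;2;6;5] [2;6;5;1] (-4)%Z eq_refl (W_mul [1] [2;6;5] (1)%Z (-4)%Z (-4)%Z (W_leaf 1) (W_sub [2] [6;5] (2)%Z (6)%Z (-4)%Z (W_leaf 2) (W_div [6] [5] (720)%Z (120)%Z (6)%Z (W_fact [6] 6 (W_leaf 6)) (W_fact [5] 5 (W_leaf 5)) ltac:(discriminate) eq_refl) eq_refl) eq_refl)).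
  - exact (W_perm [1;2;6;5] [2;6;5;1] (-3)%Z eq_refl (W_add [1] [2;6;5] (1)%Z (-4)%Z (-3)%Z (W_leaf 1) (W_sub [2] [6;5] (2)%Z (6)%Z (-4)%Z (W_leaf 2) (W_div [6] [5] (720)%Z (120)%Z (6)%Z (W_fact [6] 6 (W_leaf 6)) (W_fact [5] 5 (W_leaf 5)) ltac:(discriminate) eq_refl) eq_refl) eq_refl)).
  - exact (W_perm [1;2;5;6] [2;6;5;1] (-2)%Z eq_refl (W_sub [1] [2;5;6] (1)%Z (3)%Z (-2)%Z (W_leaf 1) (W_sub [2] [5;6] (2)%Z (-1)%Z (3)%Z (W_leaf 2) (W_sub [5] [6] (5)%Z (6)%Z (-1)%Z (W_leaf 5) (W_leaf 6) eq_refl) eq_refl) eq_refl)).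
  - exact (W_perm [1;2;5;6] [2;6;5;1] (-1)%Z eq_refl (W_add [1] [2;5;6] (1)%Z (-2)%Z (-1)%Z (W_leaf 1) (W_mul [2] [5;6] (2)%Z (-1)%Z (-2)%Z (W_leaf 2) (W_sub [5] [6] (5)%Z (6)%Z (-1)%Z (W_leaf 5) (W_leaf 6) eq_refl) eq_refl) eq_refl)).
  - exact (W_perm [1;2;5;6] [2;6;5;1] (0)%Z eq_refl (W_sub [1] [2;5;6] (1)%Z (1)%Z (0)%Z (W_leaf 1) (W_add [2] [5;6] (2)%Z (-1)%Z (1)%Z (W_leaf 2) (W_sub [5] [6] (5)%Z (6)%Z (-1)%Z (W_leaf 5) (W_leaf 6) eq_refl) eq_refl) eq_refl)).
  - exact (W_perm [1;2;5;6] [2;6;5;1] (1)%Z eq_refl (W_pow [1] [2;5;6] (1)%Z 13 (1)%Z ltac:(discriminate) (W_leaf 1) (W_add [2] [5;6] (2)%Z (11)%Z (13)%Z (W_leaf 2) (W_add [5] [6] (5)%Z (6)%Z (11)%Z (W_leaf 5) (W_leaf 6) eq_refl) eq_refl) eq_refl)).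
  - exact (W_perm [1;2;5;6] [2;6;5;1] (2)%Z eq_refl (W_add [1] [2;5;6] (1)%Z (1)%Z (2)%Z (W_leaf 1) (W_add [2] [5;6] (2)%Z (-1)%Z (1)%Z (W_leaf 2) (W_sub [5] [6] (5)%Z (6)%Z (-1)%Z (W_leaf 5) (W_leaf 6) eq_refl) eq_refl) eq_refl)).
  - exact (W_perm [1;2;5;6] [2;6;5;1] (3)%Z eq_refl (W_mul [1] [2;5;6] (1)%Z (3)%Z (3)%Z (W_leaf 1) (W_sub [2] [5;6] (2)%Z (-1)%Z (3)%Z (W_leaf 2) (W_sub [5] [6] (5)%Z (6)%Z (-1)%Z (W_leaf 5) (W_leaf 6) eq_refl) eq_refl) eq_refl)).
  - exact (W_perm [1;2;5;6] [2;6;5;1] (4)%Z eq_refl (W_add [1] [2;5;6] (1)%Z (3)%Z (4)%Z (W_leaf 1) (W_sub [2] [5;6] (2)%Z (-1)%Z (3)%Z (W_leaf 2) (W_sub [5] [6] (5)%Z (6)%Z (-1)%Z (W_leaf 5) (W_leaf 6) eq_refl) eq_refl) eq_refl)).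
  - exact (W_perm [1;2;6;5] [2;6;5;1] (5)%Z eq_refl (W_sub [1] [2;6;5] (1)%Z (-4)%Z (5)%Z (W_leaf 1) (W_sub [2] [6;5] (2)%Z (6)%Z (-4)%Z (W_leaf 2) (W_div [6] [5] (720)%Z (120)%Z (6)%Z (W_fact [6] 6 (W_leaf 6)) (W_fact [5] 5 (W_leaf 5)) ltac:(discriminate) eq_refl) eq_refl) eq_refl)).
  - exact (W_perm [1;5;6;2] [2;6;5;1] (6)%Z eq_refl (W_add [1] [5;6;2] (1)%Z (5)%Z (6)%Z (W_leaf 1) (W_div [5] [6;2] (120)%Z (24)%Z (5)%Z (W_fact [5] 5 (W_leaf 5)) (W_fact [6;2] 4 (W_sub [6] [2] (6)%Z (2)%Z (4)%Z (W_leaf 6) (W_leaf 2) eq_refl)) ltac:(discriminate) eq_refl) eq_refl)).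
  - exact (W_perm [1;2;5;6] [2;6;5;1] (7)%Z eq_refl (W_mul [1] [2;5;6] (1)%Z (7)%Z (7)%Z (W_leaf 1) (W_div [2;5] [6] (5040)%Z (720)%Z (7)%Z (W_fact [2;5] 7 (W_add [2] [5] (2)%Z (5)%Z (7)%Z (W_leaf 2) (W_leaf 5) eq_refl)) (W_fact [6] 6 (W_leaf 6)) ltac:(discriminate) eq_refl) eq_refl)).
  - exact (W_perm [1;2;6;5] [2;6;5;1] (8)%Z eq_refl (W_mul [1] [2;6;5] (1)%Z (8)%Z (8)%Z (W_leaf 1) (W_add [2] [6;5] (2)%Z (6)%Z (8)%Z (W_leaf 2) (W_div [6] [5] (720)%Z (120)%Z (6)%Z (W_fact [6] 6 (W_leaf 6)) (W_fact [5] 5 (W_leaf 5)) ltac:(discriminate) eq_refl) eq_refl) eq_refl)).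
  - destruct H.
Qed.

Lemma adj7 : forall a, (-9 <= a <= 8)%Z -> W [2;1;8;7] a.
Proof.
  intros a Ha.
  assert (a = -9 \/ a = -8 \/ a = -7 \/ a = -6 \/ a = -5 \/ a = -4 \/ a = -3 \/ a = -2 \/ a = -1 \/ a = 0 \/ a = 1 \/ a = 2 \/ a = 3 \/ a = 4 \/ a = 5 \/ a = 6 \/ a = 7 \/ a = 8 \/ False)%Z as H by lia.
  repeat (destruct H as [H|H]; [subst a|]).
  - exact (W_perm [1;7;2;8] [2;1;8;7] (-9)%Z eq_refl (W_mul [1] [7;2;8] (1)%Z (-9)%Z (-9)%Z (W_leaf 1) (W_sub [7] [2;8] (7)%Z (16)%Z (-9)%Z (W_leaf 7) (W_mul [2] [8] (2)%Z (8)%Z (16)%Z (W_leaf 2) (W_leaf 8) eq_refl) eq_refl) eq_refl)).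
  - exact (W_perm [1;7;2;8] [2;1;8;7] (-8)%Z eq_refl (W_add [1] [7;2;8] (1)%Z (-9)%Z (-8)%Z (W_leaf 1) (W_sub [7] [2;8] (7)%Z (16)%Z (-9)%Z (W_leaf 7) (W_mul [2] [8] (2)%Z (8)%Z (16)%Z (W_leaf 2) (W_leaf 8) eq_refl) eq_refl) eq_refl)).
  - exact (W_perm [2;8;1;7] [2;1;8;7] (-7)%Z eq_refl (W_sub [2] [8;1;7] (2)%Z (9)%Z (-7)%Z (W_leaf 2) (W_add [8] [1;7] (8)%Z (1)%Z (9)%Z (W_leaf 8) (W_pow [1] [7] (1)%Z 7 (1)%Z ltac:(discriminate) (W_leaf 1) (W_leaf 7) eq_refl) eq_refl) eq_refl)).
  - exact (W_perm [1;7;8;2] [2;1;8;7] (-6)%Z eq_refl (W_sub [1] [7;8;2] (1)%Z (7)%Z (-6)%Z (W_leaf 1) (W_div [7] [8;2] (5040)%Z (720)%Z (7)%Z (W_fact [7] 7 (W_leaf 7)) (W_fact [8;2] 6 (W_sub [8] [2] (8)%Z (2)%Z (6)%Z (W_leaf 8) (W_leaf 2) eq_refl)) ltac:(discriminate) eq_refl) eq_refl)).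
  - exact (W_perm [1;8;2;7] [2;1;8;7] (-5)%Z eq_refl (W_add [1] [8;2;7] (1)%Z (-6)%Z (-5)%Z (W_leaf 1) (W_sub [8] [2;7] (8)%Z (14)%Z (-6)%Z (W_leaf 8) (W_mul [2] [7] (2)%Z (7)%Z (14)%Z (W_leaf 2) (W_leaf 7) eq_refl) eq_refl) eq_refl)).
  - exact (W_perm [2;7;1;8] [2;1;8;7] (-4)%Z eq_refl (W_mul [2] [7;1;8] (2)%Z (-2)%Z (-4)%Z (W_leaf 2) (W_sub [7] [1;8] (7)%Z (9)%Z (-2)%Z (W_leaf 7) (W_add [1] [8] (1)%Z (8)%Z (9)%Z (W_leaf 1) (W_leaf 8) eq_refl) eq_refl) eq_refl)).
  - exact (W_perm [1;7;2;8] [2;1;8;7] (-3)%Z eq_refl (W_mul [1] [7;2;8] (1)%Z (-3)%Z (-3)%Z (W_leaf 1) (W_sub [7] [2;8] (7)%Z (10)%Z (-3)%Z (W_leaf 7) (W_add [2] [8] (2)%Z (8)%Z (10)%Z (W_leaf 2) (W_leaf 8) eq_refl) eq_refl) eq_refl)).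
  - exact (W_perm [1;2;7;8] [2;1;8;7] (-2)%Z eq_refl (W_sub [1] [2;7;8] (1)%Z (3)%Z (-2)%Z (W_leaf 1) (W_sub [2] [7;8] (2)%Z (-1)%Z (3)%Z (W_leaf 2) (W_sub [7] [8] (7)%Z (8)%Z (-1)%Z (W_leaf 7) (W_leaf 8) eq_refl) eq_refl) eq_refl)).
  - exact (W_perm [1;2;7;8] [2;1;8;7] (-1)%Z eq_refl (W_add [1] [2;7;8] (1)%Z (-2)%Z (-1)%Z (W_leaf 1) (W_mul [2] [7;8] (2)%Z (-1)%Z (-2)%Z (W_leaf 2) (W_sub [7] [8] (7)%Z (8)%Z (-1)%Z (W_leaf 7) (W_leaf 8) eq_refl) eq_refl) eq_refl)).
  - exact (W_perm [1;2;7;8] [2;1;8;7] (0)%Z eq_refl (W_sub [1] [2;7;8] (1)%Z (1)%Z (0)%Z (W_leaf 1) (W_add [2] [7;8] (2)%Z (-1)%Z (1)%Z (W_leaf 2) (W_sub [7] [8] (7)%Z (8)%Z (-1)%Z (W_leaf 7) (W_leaf 8) eq_refl) eq_refl) eq_refl)).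
  - exact (W_perm [1;2;7;8] [2;1;8;7] (1)%Z eq_refl (W_mul [1] [2;7;8] (1)%Z (1)%Z (1)%Z (W_leaf 1) (W_add [2] [7;8] (2)%Z (-1)%Z (1)%Z (W_leaf 2) (W_sub [7] [8] (7)%Z (8)%Z (-1)%Z (W_leaf 7) (W_leaf 8) eq_refl) eq_refl) eq_refl)).
  - exact (W_perm [1;2;7;8] [2;1;8;7] (2)%Z eq_refl (W_add [1] [2;7;8] (1)%Z (1)%Z (2)%Z (W_leaf 1) (W_add [2] [7;8] (2)%Z (-1)%Z (1)%Z (W_leaf 2) (W_sub [7] [8] (7)%Z (8)%Z (-1)%Z (W_leaf 7) (W_leaf 8) eq_refl) eq_refl) eq_refl)).
  - exact (W_perm [1;2;7;8] [2;1;8;7] (3)%Z eq_refl (W_mul [1] [2;7;8] (1)%Z (3)%Z (3)%Z (W_leaf 1) (W_sub [2] [7;8] (2)%Z (-1)%Z (3)%Z (W_leaf 2) (W_sub [7] [8] (7)%Z (8)%Z (-1)%Z (W_leaf 7) (W_leaf 8) eq_refl) eq_refl) eq_refl)).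
  - exact (W_perm [1;2;7;8] [2;1;8;7] (4)%Z eq_refl (W_add [1] [2;7;8] (1)%Z (3)%Z (4)%Z (W_leaf 1) (W_sub [2] [7;8] (2)%Z (-1)%Z (3)%Z (W_leaf 2) (W_sub [7] [8] (7)%Z (8)%Z (-1)%Z (W_leaf 7) (W_leaf 8) eq_refl) eq_refl) eq_refl)).
  - exact (W_perm [7;2;1;8] [2;1;8;7] (5)%Z eq_refl (W_sub [7] [2;1;8] (7)%Z (2)%Z (5)%Z (W_leaf 7) (W_mul [2] [1;8] (2)%Z (1)%Z (2)%Z (W_leaf 2) (W_pow [1] [8] (1)%Z 8 (1)%Z ltac:(discriminate) (W_leaf 1) (W_leaf 8) eq_refl) eq_refl) eq_refl)).
  - exact (W_perm [1;2;7;8] [2;1;8;7] (6)%Z eq_refl (W_mul [1] [2;7;8] (1)%Z (6)%Z (6)%Z (W_leaf 1) (W_sub [2;7] [8] (14)%Z (8)%Z (6)%Z (W_mul [2] [7] (2)%Z (7)%Z (14)%Z (W_leaf 2) (W_leaf 7) eq_refl) (W_leaf 8) eq_refl) eq_refl)).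
  - exact (W_perm [1;7;8;2] [2;1;8;7] (7)%Z eq_refl (W_mul [1] [7;8;2] (1)%Z (7)%Z (7)%Z (W_leaf 1) (W_div [7] [8;2] (5040)%Z (720)%Z (7)%Z (W_fact [7] 7 (W_leaf 7)) (W_fact [8;2] 6 (W_sub [8] [2] (8)%Z (2)%Z (6)%Z (W_leaf 8) (W_leaf 2) eq_refl)) ltac:(discriminate) eq_refl) eq_refl)).
  - exact (W_perm [1;7;8;2] [2;1;8;7] (8)%Z eq_refl (W_add [1] [7;8;2] (1)%Z (7)%Z (8)%Z (W_leaf 1) (W_div [7] [8;2] (5040)%Z (720)%Z (7)%Z (W_fact [7] 7 (W_leaf 7)) (W_fact [8;2] 6 (W_sub [8] [2] (8)%Z (2)%Z (6)%Z (W_leaf 8) (W_leaf 2) eq_refl)) ltac:(discriminate) eq_refl) eq_refl)).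
  - destruct H.
Qed.


Lemma one5 : forall n, (8 <= n)%nat -> (1 <= 5^n/10/10/10/10/10)%nat.
Proof.
  intros n Hn.
  assert (H := Nat.pow_le_mono_r 5 8 n ltac:(lia) Hn).
  apply Nat2Z.inj_le in H. rewrite Nat2Z.inj_pow in H. change (Z.of_nat 5 ^ Z.of_nat 8)%Z with 390625%Z in H.
  lia.
Qed.

Definition T (r : nat) : Z := match r with
  | 0 => 90625
  | 1 => 53125
  | 2 => 65625
  | 3 => 28125
  | 4 => 40625
  | 5 => 3125
  | 6 => 15625
  | _ => 78125
  end.

Lemma lowval : forall n, (8 <= n)%nat -> (Z.of_nat (5^n) mod 100000 = T ((n-8) mod 8))%Z.
Proof.
  intros n Hn.
  assert (E : n = (8 + (n-8) mod 8 + 8 * ((n-8)/8))%nat).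
  { pose proof (Nat.div_mod_eq (n-8) 8). lia. }
  rewrite E at 1. rewrite tbl.
  assert (Hr : ((n-8) mod 8 < 8)%nat) by (apply Nat.mod_upper_bound; lia).
  destruct ((n-8) mod 8) as [|[|[|[|[|[|[|[|]]]]]]]]; try lia;
  rewrite Nat2Z.inj_pow; vm_compute; reflexivity.
Qed.

Lemma gen_K : forall n K, (8 <= n)%nat ->
  digits (5^n) = 5 :: K ++ digits (5^n/10/10/10/10/10) ->
  (forall a, (-9 <= a <= 8)%Z -> W K a) ->
  (Z.of_nat n <= sumc (mk [] (digits (5^n/10/10/10/10/10))))%Z ->
  selfcondensable (5^n).
Proof.
  intros n K Hn HD HK HS.
  set (U := digits (5^n/10/10/10/10/10)) in *.
  assert (HF : Forall valid (mk [] U)).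
  { apply mk_valid; [apply digits_lt10, one5; auto| constructor]. }
  destruct (greedy0 (mk [] U) (Z.of_nat n) HF ltac:(lia) ltac:(lia) HS) as [v [Hv Hb]].
  assert (HKa := HK (Z.of_nat n - v)%Z ltac:(lia)).
  assert (HW := W_add _ _ v _ (Z.of_nat n) Hv HKa ltac:(lia)).
  refine (final n _ (Permutation_sym _) HW).
  rewrite HD. apply perm_skip. eapply perm_trans; [apply Permutation_app_comm|].
  apply Permutation_app_tail. apply Permutation_sym, (mk_perm U []).
Qed.

Lemma digits_split : forall n, (8 <= n)%nat ->
  digits (5^n) = (let m := 5^n in [m mod 10; m/10 mod 10; m/10/10 mod 10; m/10/10/10 mod 10; m/10/10/10/10 mod 10])
     ++ digits (5^n/10/10/10/10/10).
Proof. intros n Hn. apply low5, one5, Hn. Qed.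

Lemma big8 : forall n, (8 <= n)%nat ->
  (Z.of_nat n <= sumc (mk [] (digits (5^n/10/10/10/10/10))))%Z -> selfcondensable (5^n).
Proof.
  intros n Hn HS.
  assert (HL := lowval n Hn). assert (HD := digits_split n Hn).
  assert (Hr : ((n-8) mod 8 < 8)%nat) by (apply Nat.mod_upper_bound; lia).
  cbv zeta in HD.
  destruct ((n-8) mod 8) as [|[|[|[|[|[|[|[|]]]]]]]]; try lia; unfold T in HL.
  - apply (gen_K n [2;6;0;9] Hn); [|exact adj0|exact HS].
    rewrite HD. cbn [app]. repeat f_equal; lia.
  - apply (gen_K n [2;1;3;5] Hn); [|exact adj1|exact HS].
    rewrite HD. cbn [app]. repeat f_equal; lia.
  - apply (gen_K n [2;6;5;6] Hn); [|exact adj2|exact HS].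
    rewrite HD. cbn [app]. repeat f_equal; lia.
  - apply (gen_K n [2;1;8;2] Hn); [|exact adj3|exact HS].
    rewrite HD. cbn [app]. repeat f_equal; lia.
  - apply (gen_K n [2;6;0;4] Hn); [|exact adj4|exact HS].
    rewrite HD. cbn [app]. repeat f_equal; lia.
  - apply (gen_K n [2;1;3;0] Hn); [|exact adj5|exact HS].
    rewrite HD. cbn [app]. repeat f_equal; lia.
  - apply (gen_K n [2;6;5;1] Hn); [|exact adj6|exact HS].
    rewrite HD. cbn [app]. repeat f_equal; lia.
  - apply (gen_K n [2;1;8;7] Hn); [|exact adj7|exact HS].
    rewrite HD. cbn [app]. repeat f_equal; lia.
Qed.
Open Scope nat_scope.
Lemma perm_isort : forall l l', isort l = isort l' -> Permutation l l'.
Proof.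
  intros l l' E. eapply perm_trans; [apply Permutation_sym, isort_perm|].
  rewrite E; apply isort_perm.
Qed.

Lemma pow_N : forall n, 5 ^ n = N.to_nat (5 ^ N.of_nat n)%N.
Proof. intro n. rewrite N2Nat.inj_pow, Nat2N.id. reflexivity. Qed.

Lemma pow_bound : forall u, 15 <= u -> 10 ^ (u + 5) <= 5 ^ (2 * u - 1).
Proof.
  intros u Hu. replace u with (15 + (u - 15)) by lia. generalize (u - 15) as j.
  induction j.
  - apply Nat2Z.inj_le. rewrite !Nat2Z.inj_pow. apply Z.leb_le. vm_compute. reflexivity.
  - replace (15 + S j + 5) with (S (15 + j + 5)) by lia.
    replace (2 * (15 + S j) - 1) with (S (S (2 * (15 + j) - 1))) by lia.
    rewrite !Nat.pow_succ_r'. lia.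
Qed.

Lemma large_ok : forall n, 28 <= n ->
  (Z.of_nat n <= sumc (mk [] (digits (5^n/10/10/10/10/10))))%Z.
Proof.
  intros n Hn.
  assert (H1 := one5 n ltac:(lia)).
  assert (HL := digits_len _ H1).
  assert (HS := mk_sum (digits (5^n/10/10/10/10/10)) [] ltac:(simpl; lia)).
  set (u := length (digits (5 ^ n / 10 / 10 / 10 / 10 / 10))) in *.
  cbn [length] in HS.
  assert (Hm : 5 ^ n < 10 ^ (u + 5)).
  { replace (u + 5) with (S (S (S (S (S u))))) by lia. rewrite !Nat.pow_succ_r'. lia. }
  destruct (le_lt_dec 15 u) as [Hu|Hu].
  - destruct (le_lt_dec (2 * u - 1) n) as [Hn2|Hn2].
    + exfalso. assert (A := pow_bound u Hu).
      assert (B := Nat.pow_le_mono_r 5 _ _ ltac:(lia) Hn2). lia.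
    + lia.
  - exfalso.
    assert (A := Nat.pow_le_mono_r 10 (u + 5) 19 ltac:(lia) ltac:(lia)).
    assert (B := Nat.pow_le_mono_r 5 28 n ltac:(lia) Hn).
    assert (C : 10 ^ 19 <= 5 ^ 28).
    { apply Nat2Z.inj_le. rewrite !Nat2Z.inj_pow. apply Z.leb_le. vm_compute. reflexivity. }
    lia.
Qed.

Definition xN (n : nat) : N := (5 ^ N.of_nat n / 10 / 10 / 10 / 10 / 10)%N.
Definition check (n : nat) : bool :=
  if orb (n <? 9) (n =? 12) then true else
  ((0 <? xN n)%N && (xN n <? 10 ^ 30)%N && (Z.of_nat n <=? sumc (mk [] (map N.to_nat (dN 30 (xN n)))))%Z).

Lemma check_ok : forall n, n < 28 -> check n = true.
Proof.
  intros n Hn. do 28 (destruct n as [|n]; [vm_compute; reflexivity|]). lia.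
Qed.

Lemma medium_ok : forall n, 9 <= n < 28 -> n <> 12 ->
  (Z.of_nat n <= sumc (mk [] (digits (5^n/10/10/10/10/10))))%Z.
Proof.
  intros n Hn H12. assert (C := check_ok n ltac:(lia)). unfold check in C.
  replace (orb (n <? 9) (n =? 12)) with false in C.
  2:{ symmetry. apply Bool.orb_false_iff; split; [apply Nat.ltb_ge|apply Nat.eqb_neq]; lia. }
  apply andb_prop in C as [C C3]. apply andb_prop in C as [C1 C2].
  apply N.ltb_lt in C1. apply N.ltb_lt in C2. apply Z.leb_le in C3.
  replace (5 ^ n / 10 / 10 / 10 / 10 / 10) with (N.to_nat (xN n)).
  - rewrite (dN_ok 30) by assumption. exact C3.
  - unfold xN. rewrite !N2Nat.inj_div, N2Nat.inj_pow, Nat2N.id. reflexivity.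
Qed.
Lemma small1 : selfcondensable (5^1).
Proof.
  split; [simpl; lia|]. change (digits (5^1)) with [5]. simpl map. apply V_single.
Qed.
Lemma small2 : selfcondensable (5^2).
Proof.
  apply (final 2 [2]).
  - apply perm_isort. rewrite (pow_N 2), dN_ok with (f := 30%nat) by (vm_compute; reflexivity). vm_compute. reflexivity.
  - exact (W_perm [2] [2] (2)%Z eq_refl (W_leaf 2)).
Qed.

Lemma small3 : selfcondensable (5^3).
Proof.
  apply (final 3 [2;1]).
  - apply perm_isort. rewrite (pow_N 3), dN_ok with (f := 30%nat) by (vm_compute; reflexivity). vm_compute. reflexivity.
  - exact (W_perm [1;2] [2;1] (3)%Z eq_refl (W_add [1] [2] (1)%Z (2)%Z (3)%Z (W_leaf 1) (W_leaf 2) eq_refl)).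
Qed.

Lemma small4 : selfcondensable (5^4).
Proof.
  apply (final 4 [2;6]).
  - apply perm_isort. rewrite (pow_N 4), dN_ok with (f := 30%nat) by (vm_compute; reflexivity). vm_compute. reflexivity.
  - exact (W_perm [6;2] [2;6] (4)%Z eq_refl (W_sub [6] [2] (6)%Z (2)%Z (4)%Z (W_leaf 6) (W_leaf 2) eq_refl)).
Qed.

Lemma small5 : selfcondensable (5^5).
Proof.
  apply (final 5 [2;1;3]).
  - apply perm_isort. rewrite (pow_N 5), dN_ok with (f := 30%nat) by (vm_compute; reflexivity). vm_compute. reflexivity.
  - exact (W_perm [1;2;3] [2;1;3] (5)%Z eq_refl (W_mul [1] [2;3] (1)%Z (5)%Z (5)%Z (W_leaf 1) (W_add [2] [3] (2)%Z (3)%Z (5)%Z (W_leaf 2) (W_leaf 3) eq_refl) eq_refl)).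
Qed.

Lemma small6 : selfcondensable (5^6).
Proof.
  apply (final 6 [2;6;5;1]).
  - apply perm_isort. rewrite (pow_N 6), dN_ok with (f := 30%nat) by (vm_compute; reflexivity). vm_compute. reflexivity.
  - exact (W_perm [1;5;6;2] [2;6;5;1] (6)%Z eq_refl (W_add [1] [5;6;2] (1)%Z (5)%Z (6)%Z (W_leaf 1) (W_div [5] [6;2] (120)%Z (24)%Z (5)%Z (W_fact [5] 5 (W_leaf 5)) (W_fact [6;2] 4 (W_sub [6] [2] (6)%Z (2)%Z (4)%Z (W_leaf 6) (W_leaf 2) eq_refl)) ltac:(discriminate) eq_refl) eq_refl)).
Qed.

Lemma small7 : selfcondensable (5^7).
Proof.
  apply (final 7 [2;1;8;7]).
  - apply perm_isort. rewrite (pow_N 7), dN_ok with (f := 30%nat) by (vm_compute; reflexivity). vm_compute. reflexivity.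
  - exact (W_perm [1;7;8;2] [2;1;8;7] (7)%Z eq_refl (W_mul [1] [7;8;2] (1)%Z (7)%Z (7)%Z (W_leaf 1) (W_div [7] [8;2] (5040)%Z (720)%Z (7)%Z (W_fact [7] 7 (W_leaf 7)) (W_fact [8;2] 6 (W_sub [8] [2] (8)%Z (2)%Z (6)%Z (W_leaf 8) (W_leaf 2) eq_refl)) ltac:(discriminate) eq_refl) eq_refl)).
Qed.

Lemma small8 : selfcondensable (5^8).
Proof.
  apply (final 8 [2;6;0;9;3]).
  - apply perm_isort. rewrite (pow_N 8), dN_ok with (f := 30%nat) by (vm_compute; reflexivity). vm_compute. reflexivity.
  - exact (W_perm [0;2;3;6;9] [2;6;0;9;3] (8)%Z eq_refl (W_add [0] [2;3;6;9] (0)%Z (8)%Z (8)%Z (W_leaf 0) (W_add [2] [3;6;9] (2)%Z (6)%Z (8)%Z (W_leaf 2) (W_sub [3] [6;9] (3)%Z (-3)%Z (6)%Z (W_leaf 3) (W_sub [6] [9] (6)%Z (9)%Z (-3)%Z (W_leaf 6) (W_leaf 9) eq_refl) eq_refl) eq_refl) eq_refl)).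
Qed.

Lemma small12 : selfcondensable (5^12).
Proof.
  apply (final 12 [2;6;0;4;1;4;4;2]).
  - apply perm_isort. rewrite (pow_N 12), dN_ok with (f := 30%nat) by (vm_compute; reflexivity). vm_compute. reflexivity.
  - exact (W_perm [4;4;4;0;2;6;1;2] [2;6;0;4;1;4;4;2] (12)%Z eq_refl (W_add [4;4;4] [0;2;6;1;2] (12)%Z (0)%Z (12)%Z (W_add [4;4] [4] (8)%Z (4)%Z (12)%Z (W_add [4] [4] (4)%Z (4)%Z (8)%Z (W_leaf 4) (W_leaf 4) eq_refl) (W_leaf 4) eq_refl) (W_mul [0] [2;6;1;2] (0)%Z (24)%Z (0)%Z (W_leaf 0) (W_mul [2;6] [1;2] (12)%Z (2)%Z (24)%Z (W_mul [2] [6] (2)%Z (6)%Z (12)%Z (W_leaf 2) (W_leaf 6) eq_refl) (W_mul [1] [2] (1)%Z (2)%Z (2)%Z (W_leaf 1) (W_leaf 2) eq_refl) eq_refl) eq_refl) eq_refl)).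
Qed.

Theorem theorem7p4 : forall n : nat, (1 <= n)%nat -> selfcondensable (5 ^ n).
Proof.
  intros n Hn.
  destruct (le_lt_dec 28 n) as [H|H].
  - apply big8; [lia|]. apply large_ok; lia.
  - destruct (le_lt_dec 9 n) as [H9|H9].
    + destruct (Nat.eq_dec n 12) as [->|H12]; [exact small12|].
      apply big8; [lia|]. apply medium_ok; lia.
    + destruct n as [|[|[|[|[|[|[|[|[|]]]]]]]]]; try lia.
      * exact small1.
      * exact small2.
      * exact small3.
      * exact small4.
      * exact small5.
      * exact small6.
      * exact small7.
      * exact small8.
Qed.
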